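(* Assume (A1). For all $x,y\in J$, $$\mathcal{D}_0(y,x)=\min\big(\mathcal{D}_{\mathrm{straight}}(y,x),\,\mathcal{D}_{\mathrm{junction}}(y,x)\big).$$
   Context: Junction: fix an integer $N\ge1$ and $N$ distinct unit vectors $e_1,\dots,e_N\in\mathbb{R}^2$. Set $J_i=[0,\infty)e_i$, $J_i^*=J_i\setminus\{0\}$, $J=\bigcup_{i=1}^NJ_i$, $I_N=\{1,\dots,N\}$. Each $x\in J_i$ is written $x=x_ie_i$, $x_i\ge0$. (A1): there is $\gamma>0$ with $L_i\in C^2(\mathbb{R})$, $L_i''\ge\gamma$ for each $i\in I_N$. $L_0(p)=\min_jL_j(p)$. Reduced minimal action: $A(x)=\mathbb{R}e_i$ if $x\in J_i^*$, $A(0)=\bigcup_i[0,\infty)e_i$; for $P=pe_i\in A(x)$, $L(x,P)=L_i(p)$ if $x\in J_i^*$, $L(0,P)=L_0(p)$. $\mathcal{A}(0,y;1,x)$ is the set of $X\in W^{1,1}([0,1];\mathbb{R}^2)$ with $X(\tau)\in J$, $\dot X(\tau)\in A(X(\tau))$ a.e., $X(0)=y$, $X(1)=x$; $\mathcal{D}_0(y,x)=\inf_{X\in\mathcal{A}(0,y;1,x)}\int_0^1L(X,\dot X)\,d\tau$. Auxiliary functions: $\mathcal{D}_{\mathrm{straight}}(y,x)=L_i(x_i-y_i)$ if $(y,x)\in J_i\times J_i\setminus\{(0,0)\}$ for some $i$; $=L_0(0)$ if $y=x=0$; $=+\infty$ otherwise. For $\tau\in[0,1]$: $\mathcal{E}_1(\tau,y)=\tau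 L_j(-y_j/\tau)-\tau L_0(0)$ if $y=y_je_j\ne0$ and $\tau\ne0$; $\mathcal{E}_1(\tau,0)=0$; $\mathcal{E}_1(0,y)=+\infty$ if $y\ne0$. $\mathcal{E}_2(\tau,x)=(1-\tau)L_i(x_i/(1-\tau))+\tau L_0(0)$ if $x=x_ie_i\ne0$ and $\tau\ne1$; $\mathcal{E}_2(\tau,0)=L_0(0)$; $\mathcal{E}_2(1,x)=+\infty$ if $x\ne0$. $\mathcal{D}_{\mathrm{junction}}(y,x)=\inf_{0\le\tau_1\le\tau_2\le1}\{\mathcal{E}_1(\tau_1,y)+\mathcal{E}_2(\tau_2,x)\}$. *)

(* Defs.v *)
From Stdlib Require Import Reals Lra Lia Classical ClassicalEpsilon.
Open Scope R_scope.

Definition pt := (R * R)%type.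
Definition pzero : pt := (0, 0).
Definition scal (t : R) (u : pt) : pt := (t * fst u, t * snd u).
Definition psub (u v : pt) : pt := (fst u - fst v, snd u - snd v).
Definition dot (u v : pt) : R := fst u * fst v + snd u * snd v.
Definition pnorm (u : pt) : R := sqrt (dot u u).

Inductive Rbar := Fin (r : R) | PInf | MInf.

Definition Rbar_le (a b : Rbar) : Prop :=
  match a, b with
  | MInf, _ => True
  | _, PInf => True
  | Fin x, Fin y => x <= y
  | _, _ => False
  end.

Definition Rbar_plus (a b : Rbar) : Rbar :=
  match a, b with
  | Fin x, Fin y => Fin (x + y)
  | PInf, _ | _, PInf => PInf
  | _, _ => MInf
  end.

Definition Rbar_min (a b : Rbar) : Rbar :=
  match a, b with
  | MInf, _ | _, MInf => MInf
  | PInf, c | c, PInf => c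
  | Fin x, Fin y => Fin (Rmin x y)
  end.

Definition is_glb (S : Rbar -> Prop) (m : Rbar) : Prop :=
  (forall z, S z -> Rbar_le m z) /\
  (forall m', (forall z, S z -> Rbar_le m' z) -> Rbar_le m' m).

(** the infimum (a glb always exists in the extended reals; it is unique) *)
Definition Einf (S : Rbar -> Prop) : Rbar :=
  epsilon (inhabits PInf) (is_glb S).

(** "the unique v such that P v" (used for case-wise definitions whose
    branch index is unique) *)
Definition the_Rbar (P : Rbar -> Prop) : Rbar := epsilon (inhabits PInf) P.

Definition negligible (S : R -> Prop) : Prop :=
  forall eps, 0 < eps -> exists a b : nat -> R,
    (forall n, a n <= b n) /\
    (forall t, S t -> exists n, a n < t < b n) /\
    (forall n, sum_f_R0 (fun k => b k - a k) n <= eps).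

Definition ae01 (P : R -> Prop) : Prop :=
  negligible (fun t => 0 <= t <= 1 /\ ~ P t).

Fixpoint rsum (f : nat -> R) (n : nat) : R :=
  match n with O => 0 | S m => rsum f m + f m end.

(** * McShane integral on [0,1] (coincides with the Lebesgue integral:
      f is McShane integrable on [0,1] with integral I iff f is Lebesgue
      integrable on [0,1] with integral I). *)
Definition mcshane01 (f : R -> R) (I : R) : Prop :=
  forall eps, 0 < eps -> exists delta : R -> R,
    (forall t, 0 <= t <= 1 -> 0 < delta t) /\
    forall (n : nat) (x tg : nat -> R),
      x O = 0 -> x n = 1 ->
      (forall k, (k < n)%nat -> x k <= x (S k)) ->
      (forall k, (k < n)%nat ->
         0 <= tg k <= 1 /\ tg k - delta (tg k) < x k /\
         x (S k) < tg k + delta (tg k)) ->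
      Rabs (rsum (fun k => f (tg k) * (x (S k) - x k)) n - I) < eps.

(** * Absolutely continuous curves [0,1] -> R^2  (= W^{1,1} representatives) *)
Definition abs_cont01 (X : R -> pt) : Prop :=
  forall eps, 0 < eps -> exists delta, 0 < delta /\
    forall (n : nat) (a b : nat -> R),
      (forall k, (k < n)%nat -> 0 <= a k /\ a k <= b k /\ b k <= 1) ->
      (forall k, (S k < n)%nat -> b k <= a (S k)) ->
      rsum (fun k => b k - a k) n < delta ->
      rsum (fun k => pnorm (psub (X (b k)) (X (a k)))) n < eps.

Definition has_deriv (X : R -> pt) (t : R) (V : pt) : Prop :=
  derivable_pt_lim (fun s => fst (X s)) t (fst V) /\
  derivable_pt_lim (fun s => snd (X s)) t (snd V).

(** * Hypothesis (A1) on a single L_i *)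
Definition C2_convex (gamma : R) (f : R -> R) : Prop :=
  exists f1 f2 : R -> R,
    (forall p, derivable_pt_lim f p (f1 p)) /\
    (forall p, derivable_pt_lim f1 p (f2 p)) /\
    continuity f2 /\
    (forall p, gamma <= f2 p).

Section Junction.
(* N branches, directions e 0, ..., e (N-1) (indices shifted by one
   with respect to the paper's I_N = {1..N}), Lagrangians L 0, ..., L (N-1). *)
Variable N : nat.
Variable e : nat -> pt.
Variable L : nat -> R -> R.

Fixpoint Lmin (n : nat) (p : R) : R :=
  match n with O => L O p | S m => Rmin (Lmin m p) (L (S m) p) end.
Definition L0 (p : R) : R := Lmin (N - 1) p.

Definition inJi (i : nat) (x : pt) : Prop := exists t, 0 <= t /\ x = scal t (e i).
Definition inJstar (i : nat) (x : pt) : Prop := exists t, 0 < t /\ x = scal t (e i).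
Definition inJ (x : pt) : Prop := exists i, (i < N)%nat /\ inJi i x.
Definition coord (i : nat) (x : pt) : R := dot x (e i).

Definition Aset (x P : pt) : Prop :=
  (exists i, (i < N)%nat /\ inJstar i x /\ exists p, P = scal p (e i)) \/
  (x = pzero /\ exists i, (i < N)%nat /\ exists p, 0 <= p /\ P = scal p (e i)).

Definition Lrel (x P : pt) (v : R) : Prop :=
  (exists i, (i < N)%nat /\ inJstar i x /\
     exists p, P = scal p (e i) /\ v = L i p) \/
  (x = pzero /\ exists i, (i < N)%nat /\
     exists p, 0 <= p /\ P = scal p (e i) /\ v = L0 p).

(** X ∈ A(0,y;1,x), with V a (version of the a.e.-defined) derivative of X *)
Definition admissible (X : R -> pt) (V : R -> pt) (y x : pt) : Prop :=
  (forall t, 0 <= t <= 1 -> inJ (X t)) /\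
  abs_cont01 X /\ X 0 = y /\ X 1 = x /\
  ae01 (fun t => has_deriv X t (V t) /\ Aset (X t) (V t)).

Definition has_cost (X V : R -> pt) (c : R) : Prop :=
  exists f : R -> R,
    ae01 (fun t => Lrel (X t) (V t) (f t)) /\ mcshane01 f c.

(** D_0(y,x): infimum of the actions (curves of infinite action do not
    change the infimum) *)
Definition D0 (y x : pt) : Rbar :=
  Einf (fun z => exists X V c, admissible X V y x /\ has_cost X V c /\ z = Fin c).

Definition Dstraight (y x : pt) : Rbar :=
  the_Rbar (fun v =>
    (exists i, (i < N)%nat /\ inJi i y /\ inJi i x /\ ~ (y = pzero /\ x = pzero) /\
       v = Fin (L i (coord i x - coord i y))) \/
    (y = pzero /\ x = pzero /\ v = Fin (L0 0)) \/
    (~ (exists i, (i < N)%nat /\ inJi i y /\ inJi i x) /\ v = PInf)).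

Definition E1 (tau : R) (y : pt) : Rbar :=
  the_Rbar (fun v =>
    (exists j, (j < N)%nat /\ inJstar j y /\ tau <> 0 /\
       v = Fin (tau * L j (- coord j y / tau) - tau * L0 0)) \/
    (y = pzero /\ v = Fin 0) \/
    (tau = 0 /\ y <> pzero /\ v = PInf)).

Definition E2 (tau : R) (x : pt) : Rbar :=
  the_Rbar (fun v =>
    (exists i, (i < N)%nat /\ inJstar i x /\ tau <> 1 /\
       v = Fin ((1 - tau) * L i (coord i x / (1 - tau)) + tau * L0 0)) \/
    (x = pzero /\ v = Fin (L0 0)) \/
    (tau = 1 /\ x <> pzero /\ v = PInf)).

Definition Djunction (y x : pt) : Rbar :=
  Einf (fun z => exists t1 t2, 0 <= t1 /\ t1 <= t2 /\ t2 <= 1 /\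
                  z = Rbar_plus (E1 t1 y) (E2 t2 x)).

End Junction.

(* Main.v *)
Require Import Defs.
From Stdlib Require Import Reals Lra Lia Classical ClassicalEpsilon FunctionalExtensionality Cantor ZArith.
Open Scope R_scope.


Lemma rsum_ext f g n : (forall k, (k < n)%nat -> f k = g k) -> rsum f n = rsum g n.
Proof. induction n; simpl; intros H; auto. rewrite IHn by (intros; apply H; lia). rewrite H by lia. auto. Qed.
Lemma rsum_plus f g n : rsum (fun k => f k + g k) n = rsum f n + rsum g n.
Proof. induction n; simpl; [lra| rewrite IHn; lra]. Qed.
Lemma rsum_minus f g n : rsum (fun k => f k - g k) n = rsum f n - rsum g n.
Proof. induction n; simpl; [lra| rewrite IHn; lra]. Qed.
Lemma rsum_scal c f n : rsum (fun k => c * f k) n = c * rsum f n.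
Proof. induction n; simpl; [lra| rewrite IHn; lra]. Qed.
Lemma rsum_le f g n : (forall k, (k < n)%nat -> f k <= g k) -> rsum f n <= rsum g n.
Proof. induction n; simpl; intros H; [lra|]. assert (rsum f n <= rsum g n) by (apply IHn; intros; apply H; lia).
  assert (f n <= g n) by (apply H; lia). lra. Qed.
Lemma rsum_nonneg f n : (forall k, (k < n)%nat -> 0 <= f k) -> 0 <= rsum f n.
Proof. intros H. replace 0 with (rsum (fun _ => 0) n). apply rsum_le; auto.
  induction n; simpl; auto. rewrite IHn; [lra| intros; apply H; lia]. Qed.
Lemma rsum_tele h n : rsum (fun k => h (S k) - h k) n = h n - h O.
Proof. induction n; simpl; [lra| rewrite IHn; lra]. Qed.
Lemma rsum_ge_term f n i : (forall k, (k < n)%nat -> 0 <= f k) -> (i < n)%nat -> f i <= rsum f n.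
Proof. induction n; intros H Hi; [lia|]. simpl. destruct (Nat.eq_dec i n).
  - subst. assert (0 <= rsum f n) by (apply rsum_nonneg; intros; apply H; lia). lra.
  - assert (f i <= rsum f n) by (apply IHn; [intros; apply H; lia| lia]). assert (0 <= f n) by (apply H; lia). lra. Qed.
Lemma rsum_exchange (F : nat -> nat -> R) n m :
  rsum (fun k => rsum (fun j => F k j) m) n = rsum (fun j => rsum (fun k => F k j) n) m.
Proof. induction n; simpl.
  - induction m; simpl; auto. rewrite <- IHm; lra.
  - rewrite IHn. rewrite <- rsum_plus. auto. Qed.
Lemma rsum_abs f n : Rabs (rsum f n) <= rsum (fun k => Rabs (f k)) n.
Proof. induction n; simpl. rewrite Rabs_R0; lra.
  eapply Rle_trans. apply Rabs_triang. lra. Qed.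
Lemma rsum_mono_n f n m : (forall k, 0 <= f k) -> (n <= m)%nat -> rsum f n <= rsum f m.
Proof. intros H Hnm. induction Hnm as [|m' Hle IH]; [lra|]. simpl. specialize (H m'). lra. Qed.

Lemma dot_comm u v : dot u v = dot v u.
Proof. unfold dot; lra. Qed.
Lemma dot_nonneg u : 0 <= dot u u.
Proof. unfold dot. nra. Qed.
Lemma pnorm_nonneg u : 0 <= pnorm u.
Proof. apply sqrt_pos. Qed.
Lemma pnorm_sq u : pnorm u * pnorm u = dot u u.
Proof. unfold pnorm. apply sqrt_sqrt, dot_nonneg. Qed.
Lemma cauchy_schwarz u v : Rabs (dot u v) <= pnorm u * pnorm v.
Proof. apply Rsqr_incr_0_var. 2: apply Rmult_le_pos; apply pnorm_nonneg.
  rewrite <- Rsqr_abs. unfold Rsqr. replace (pnorm u * pnorm v * (pnorm u * pnorm v)) with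
  ((pnorm u * pnorm u) * (pnorm v * pnorm v)) by ring. rewrite !pnorm_sq. unfold dot.
  destruct u as [a b], v as [c d]; simpl. pose proof (Rle_0_sqr (a*d-b*c)). unfold Rsqr in *. nra. Qed.
Lemma pnorm_le_sq u r : 0 <= r -> dot u u <= r * r -> pnorm u <= r.
Proof. intros Hr H. unfold pnorm. rewrite <- (sqrt_square r) by auto. apply sqrt_le_1_alt. lra. Qed.
Lemma pnorm_ge_sq u r : 0 <= r -> r * r <= dot u u -> r <= pnorm u.
Proof. intros Hr H. unfold pnorm. rewrite <- (sqrt_square r) by auto. apply sqrt_le_1_alt. lra. Qed.
Definition padd (u v : pt) : pt := (fst u + fst v, snd u + snd v).
Lemma pnorm_triangle u v : pnorm (padd u v) <= pnorm u + pnorm v.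
Proof. apply pnorm_le_sq. pose proof (pnorm_nonneg u); pose proof (pnorm_nonneg v); lra.
  pose proof (cauchy_schwarz u v). pose proof (pnorm_sq u); pose proof (pnorm_sq v).
  assert (dot (padd u v) (padd u v) = dot u u + 2 * dot u v + dot v v) by (unfold dot, padd; simpl; ring).
  assert (dot u v <= Rabs (dot u v)) by apply Rle_abs. nra. Qed.
Lemma pnorm_scal t u : pnorm (scal t u) = Rabs t * pnorm u.
Proof. unfold pnorm. replace (dot (scal t u) (scal t u)) with ((t*t) * dot u u) by (unfold dot, scal; simpl; ring).
  rewrite sqrt_mult. rewrite <- Rsqr_def, sqrt_Rsqr_abs. auto.
  apply Rle_0_sqr. apply dot_nonneg. Qed.

Lemma Rbar_le_antisym a b : Rbar_le a b -> Rbar_le b a -> a = b.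
Proof. destruct a, b; simpl; intros; try tauto; try (f_equal; lra); auto. Qed.
Lemma Rbar_le_refl a : Rbar_le a a.
Proof. destruct a; simpl; auto; lra. Qed.
Lemma Rbar_le_trans a b c : Rbar_le a b -> Rbar_le b c -> Rbar_le a c.
Proof. destruct a, b, c; simpl; intros; try tauto; lra. Qed.

Lemma glb_exists S : exists m, is_glb S m.
Proof.
  destruct (classic (S MInf)) as [HM|HM].
  { exists MInf. split. intros; simpl; auto. intros m' H. apply H; auto. }
  destruct (classic (exists r, S (Fin r))) as [[r0 Hr0]|HE].
  - destruct (classic (exists b, forall r, S (Fin r) -> b <= r)) as [[b Hb]|HB].
    + assert (Hbd : bound (fun x => S (Fin (- x)))).
      { exists (-b). intros x Hx. specialize (Hb _ Hx). lra. }
      assert (Hne : exists x, S (Fin (- x))). { exists (-r0). rewrite Ropp_involutive. auto. }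
      destruct (completeness _ Hbd Hne) as [l [Hl1 Hl2]].
      exists (Fin (-l)). split.
      * intros z Hz. destruct z as [r| |]; simpl; auto.
        assert (-r <= l) by (apply Hl1; rewrite Ropp_involutive; auto). lra.
      * intros m' Hm'. destruct m' as [r| |]; simpl; auto.
        -- assert (l <= -r). { apply Hl2. intros x Hx. specialize (Hm' _ Hx). simpl in Hm'. lra. } lra.
        -- specialize (Hm' _ Hr0). simpl in Hm'. auto.
    + exists MInf. split. intros; simpl; auto.
      intros m' Hm'. destruct m' as [r| |]; simpl; auto.
      * exfalso. apply HB. exists r. intros r' Hr'. specialize (Hm' _ Hr'). simpl in Hm'. auto.
      * specialize (Hm' _ Hr0). simpl in Hm'. auto.
  - exists PInf. split.
    + intros z Hz. destruct z as [r| |]; simpl; auto. apply HE; eauto.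
    + intros; destruct m'; simpl; auto.
Qed.

Lemma Einf_glb S : is_glb S (Einf S).
Proof. unfold Einf. apply epsilon_spec. apply glb_exists. Qed.

Lemma glb_unique S m m' : is_glb S m -> is_glb S m' -> m = m'.
Proof. intros [H1 H2] [H1' H2']. apply Rbar_le_antisym; auto. Qed.

Lemma the_Rbar_eq (P : Rbar -> Prop) v : P v -> (forall w, P w -> w = v) -> the_Rbar P = v.
Proof. intros Hv Hu. unfold the_Rbar. apply Hu. apply epsilon_spec. eauto. Qed.

Lemma Rbar_min_le_l a b : Rbar_le (Rbar_min a b) a.
Proof. destruct a, b; simpl; auto; try lra. apply Rmin_l. Qed.
Lemma Rbar_min_le_r a b : Rbar_le (Rbar_min a b) b.
Proof. destruct a, b; simpl; auto; try lra. apply Rmin_r. Qed.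
Lemma Rbar_min_glb a b c : Rbar_le c a -> Rbar_le c b -> Rbar_le c (Rbar_min a b).
Proof. destruct a, b, c; simpl; auto; try tauto. intros; apply Rmin_glb; auto. Qed.

Lemma Rabs_lt_iff x a : Rabs x < a <-> -a < x /\ x < a.
Proof. unfold Rabs; destruct Rcase_abs; split; intros; lra. Qed.
Lemma Rabs_le_iff x a : Rabs x <= a <-> -a <= x /\ x <= a.
Proof. unfold Rabs; destruct Rcase_abs; split; intros; lra. Qed.
Lemma Rdiv_le_0_compat a b : 0 <= a -> 0 < b -> 0 <= a / b.
Proof. intros. unfold Rdiv. apply Rmult_le_pos; auto. left; apply Rinv_0_lt_compat; auto. Qed.


Lemma sum_rsum f n : sum_f_R0 f n = rsum f (S n).
Proof. induction n; simpl; auto. lra. rewrite IHn. simpl. auto. Qed.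

Lemma negl_subset (A B : R -> Prop) : negligible A -> (forall t, B t -> A t) -> negligible B.
Proof. intros HA HBA eps Heps. destruct (HA eps Heps) as [a [b [H1 [H2 H3]]]].
  exists a, b. repeat split; auto. Qed.

Definition ileave (u v : nat -> R) (k : nat) : R :=
  if Nat.even k then u (Nat.div2 k) else v (Nat.div2 k).

Lemma ileave_even u v m : ileave u v (2*m) = u m.
Proof. unfold ileave. replace (Nat.even (2*m)) with true. rewrite Nat.div2_double. auto.
  symmetry. apply Nat.even_spec. exists m. auto. Qed.
Lemma ileave_odd u v m : ileave u v (S (2*m)) = v m.
Proof. unfold ileave. replace (Nat.even (S (2*m))) with false. rewrite Nat.div2_succ_double. auto.
  rewrite Nat.even_succ. symmetry. apply Bool.not_true_iff_false. intros H. apply Nat.odd_spec in H.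
  destruct H as [k Hk]. lia. Qed.

Lemma ileave_sum u v m : rsum (ileave u v) (2 * m) = rsum u m + rsum v m.
Proof. induction m. simpl. lra.
  replace (2 * S m)%nat with (S (S (2 * m))) by lia.
  change (rsum (ileave u v) (S (S (2*m)))) with (rsum (ileave u v) (2*m) + ileave u v (2*m) + ileave u v (S (2*m))).
  change (rsum u (S m)) with (rsum u m + u m). change (rsum v (S m)) with (rsum v m + v m). rewrite IHm, ileave_even, ileave_odd. lra. Qed.

Lemma negl_union (A B : R -> Prop) : negligible A -> negligible B -> negligible (fun t => A t \/ B t).
Proof. intros HA HB eps Heps.
  destruct (HA (eps/2) ltac:(lra)) as [a1 [b1 [H1 [H2 H3]]]].
  destruct (HB (eps/2) ltac:(lra)) as [a2 [b2 [H1' [H2' H3']]]].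
  exists (ileave a1 a2), (ileave b1 b2). split; [|split].
  - intros n; unfold ileave; destruct (Nat.even n); auto.
  - intros t [Ht|Ht].
    + destruct (H2 t Ht) as [n Hn]. exists (2 * n)%nat. rewrite !ileave_even. auto.
    + destruct (H2' t Ht) as [n Hn]. exists (S (2 * n))%nat. rewrite !ileave_odd. auto.
  - intros n. rewrite sum_rsum.
    assert (Hn : forall k, 0 <= ileave b1 b2 k - ileave a1 a2 k).
    { intros k; unfold ileave; destruct (Nat.even k); [specialize (H1 (Nat.div2 k))|specialize (H1' (Nat.div2 k))]; lra. }
    apply Rle_trans with (rsum (fun k => ileave b1 b2 k - ileave a1 a2 k) (2 * S n)).
    apply rsum_mono_n; auto. lia.
    rewrite (rsum_ext _ (ileave (fun k => b1 k - a1 k) (fun k => b2 k - a2 k))).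
    2:{ intros; unfold ileave; destruct (Nat.even k); auto. }
    rewrite ileave_sum. specialize (H3 n); specialize (H3' n). rewrite sum_rsum in H3, H3'. lra.
Qed.

Lemma negl_point a : negligible (fun t => t = a).
Proof. intros eps Heps.
  exists (fun k => match k with O => a - eps/4 | _ => a end), (fun k => match k with O => a + eps/4 | _ => a end).
  split; [|split].
  - intros [|k]; lra.
  - intros t0 ->. exists O. lra.
  - intros n. induction n. simpl. lra. simpl. lra.
Qed.

Lemma geom_sum eps n : rsum (fun k => eps * (/2)^(S k)) n = eps * (1 - (/2)^n).
Proof. induction n. simpl. ring. change (rsum (fun k => eps * (/2)^(S k)) (S n)) with (rsum (fun k => eps * (/2)^(S k)) n + eps * (/2)^(S n)). rewrite IHn. simpl. field. Qed.

Lemma IZR_split k : IZR k = INR (Z.to_nat k) - INR (Z.to_nat (- k)).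
Proof. destruct (Z_le_gt_dec 0 k).
  - rewrite !INR_IZR_INZ. rewrite Z2Nat.id by lia. replace (Z.to_nat (-k)) with O by lia. simpl. lra.
  - rewrite !INR_IZR_INZ. rewrite (Z2Nat.id (-k)) by lia. replace (Z.to_nat k) with O by lia. simpl.
    rewrite opp_IZR. lra. Qed.

Section Iso.
Variable SS : R -> Prop.
Hypothesis Hiso : forall t, SS t -> exists r, 0 < r /\ forall s, SS s -> Rabs (s - t) < r -> s = t.

Definition wpow (m : nat) : R := (/2)^m.
Definition cen (n : nat) : R := let (m, p) := of_nat n in let (j1, j2) := of_nat p in (INR j1 - INR j2) * wpow m.
Definition rad (n : nat) : R := 2 * wpow (fst (of_nat n)).
Definition Qiso (n : nat) (t : R) : Prop :=
  SS t /\ Rabs (t - cen n) < rad n /\ forall s, SS s -> Rabs (s - cen n) < rad n -> s = t.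
Definition ptiso (n : nat) : R := epsilon (inhabits 0) (Qiso n).

Lemma wpow_pos m : 0 < wpow m.
Proof. unfold wpow. apply pow_lt. lra. Qed.

Lemma negl_isolated : negligible SS.
Proof.
  intros eps Heps.
  set (a := fun n => if excluded_middle_informative (exists t, Qiso n t) then ptiso n - eps * (/2)^(S (S n)) else 0).
  set (b := fun n => if excluded_middle_informative (exists t, Qiso n t) then ptiso n + eps * (/2)^(S (S n)) else 0).
  assert (Hp : forall n, 0 < (/2)^n) by (intros; apply pow_lt; lra).
  exists a, b. split; [|split].
  - intros n. unfold a, b. destruct excluded_middle_informative; [|lra]. specialize (Hp (S (S n))). nra.
  - intros t Ht. destruct (Hiso t Ht) as [r [Hr Hu]].
    destruct (pow_lt_1_zero (/2) ltac:(rewrite Rabs_pos_eq; lra) (r/4) ltac:(lra)) as [m Hm].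
    specialize (Hm m (le_n _)). rewrite Rabs_pos_eq in Hm by (apply Rlt_le, Hp).
    set (w := (/2)^m) in *. assert (Hw : 0 < w) by apply Hp.
    set (k := (up (t / w) - 1)%Z).
    assert (Hk : IZR k <= t / w < IZR k + 1).
    { unfold k. rewrite minus_IZR. destruct (archimed (t/w)). simpl. lra. }
    assert (Hc : IZR k * w <= t < IZR k * w + w).
    { destruct Hk as [Hk1 Hk2]. split.
      - apply (Rmult_le_compat_r w) in Hk1; [|lra]. unfold Rdiv in Hk1. rewrite Rmult_assoc, Rinv_l in Hk1 by lra. lra.
      - apply (Rmult_lt_compat_r w) in Hk2; [|lra]. unfold Rdiv in Hk2. rewrite Rmult_assoc, Rinv_l in Hk2 by lra. lra. }
    set (n := to_nat (m, to_nat (Z.to_nat k, Z.to_nat (-k)))).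
    assert (Hcen : cen n = IZR k * w).
    { unfold cen, n. rewrite !cancel_of_to. rewrite IZR_split. auto. }
    assert (Hrad : rad n = 2 * w). { unfold rad, n. rewrite cancel_of_to. auto. }
    assert (HQ : Qiso n t).
    { split; auto. rewrite Hcen, Hrad. split. apply Rabs_lt_iff. lra.
      intros s Hs Hsc. apply Hu; auto. apply Rabs_lt_iff in Hsc. apply Rabs_lt_iff. lra. }
    assert (Hpt : ptiso n = t).
    { assert (HQ' : Qiso n (ptiso n)) by (unfold ptiso; apply epsilon_spec; eauto).
      destruct HQ' as [_ [_ Hu']]. symmetry. apply Hu'; destruct HQ as [? [? _]]; auto. }
    exists n. unfold a, b. destruct excluded_middle_informative as [_|Hn]; [|exfalso; apply Hn; eauto].
    rewrite Hpt. specialize (Hp (S (S n))). nra.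
  - intros n. rewrite sum_rsum.
    apply Rle_trans with (rsum (fun k => eps * (/2)^(S k)) (S n)).
    + apply rsum_le. intros k _. unfold a, b. destruct excluded_middle_informative.
      * simpl. lra.
      * specialize (Hp (S k)). nra.
    + rewrite geom_sum. specialize (Hp (S n)). nra.
Qed.
End Iso.

Lemma ae01_and P Q : ae01 P -> ae01 Q -> ae01 (fun t => P t /\ Q t).
Proof. intros HP HQ. unfold ae01 in *. eapply negl_subset. apply (negl_union _ _ HP HQ).
  intros t [Ht HPQ]. destruct (classic (P t)); [right|left]; split; auto; tauto. Qed.


Definition hpart (delta : R -> R) (s : R) (n : nat) (x tg : nat -> R) : Prop :=
  x O = 0 /\ x n = s /\ (forall k, (k < n)%nat -> x k <= tg k <= x (S k)) /\
  (forall k, (k < n)%nat -> tg k - delta (tg k) < x k /\ x (S k) < tg k + delta (tg k)).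

Lemma cousin delta : (forall t, 0 <= t <= 1 -> 0 < delta t) -> exists n x tg, hpart delta 1 n x tg.
Proof.
  intros Hd.
  set (E := fun s => 0 <= s <= 1 /\ exists n x tg, hpart delta s n x tg).
  assert (HE0 : E 0).
  { split. lra. exists O, (fun _ => 0), (fun _ => 0). repeat split; intros; lia. }
  assert (Hb : bound E) by (exists 1; intros s [Hs _]; lra).
  destruct (completeness E Hb (ex_intro _ 0 HE0)) as [sg [Hub Hlub]].
  assert (Hs0 : 0 <= sg) by (apply Hub; auto).
  assert (Hs1 : sg <= 1) by (apply Hlub; intros s [Hs _]; lra).
  assert (Hds := Hd sg (conj Hs0 Hs1)).
  assert (Hex : exists s, E s /\ sg - delta sg < s).
  { apply NNPP. intros Hn. assert (sg <= sg - delta sg). apply Hlub. intros s Hs.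
    destruct (Rle_lt_dec s (sg - delta sg)); auto. exfalso; apply Hn; eauto. lra. }
  destruct Hex as [s [[Hs [n [x [tg [H1 [H2 [H3 H4]]]]]]] Hss]].
  assert (Hssg : s <= sg) by (apply Hub; split; eauto; exists n, x, tg; split; auto).
  set (sg' := Rmin 1 (sg + delta sg / 2)).
  assert (HE' : E sg').
  { split. split. unfold sg'; apply Rmin_case; lra. apply Rmin_l.
    exists (S n), (fun k => if Nat.leb k n then x k else sg'), (fun k => if Nat.ltb k n then tg k else sg).
    split; [|split; [|split]].
    - simpl. auto.
    - destruct (Nat.leb_spec (S n) n); [lia|auto].
    - intros k Hk. destruct (Nat.leb_spec k n), (Nat.ltb_spec k n), (Nat.leb_spec (S k) n); try lia.
      + apply H3; lia.
      + assert (k = n) by lia. subst k. rewrite H2. split; auto. unfold sg'; apply Rmin_case; lra.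
    - intros k Hk. destruct (Nat.leb_spec k n), (Nat.ltb_spec k n), (Nat.leb_spec (S k) n); try lia.
      + apply H4; lia.
      + assert (k = n) by lia. subst k. rewrite H2. split. lra. unfold sg'. apply Rle_lt_trans with (sg + delta sg / 2). apply Rmin_r. lra. }
  assert (sg' <= sg) by (apply Hub; auto).
  assert (sg = 1).
  { unfold sg' in H. revert H. apply Rmin_case; intros; lra. }
  subst sg. assert (sg' = 1) by (unfold sg'; apply Rmin_case_strong; intros; lra).
  rewrite H0 in HE'. destruct HE' as [_ HE']. exact HE'.
Qed.

Fixpoint nmax (h : nat -> nat) (n : nat) : nat :=
  match n with O => O | S m => Nat.max (nmax h m) (h m) end.
Lemma nmax_ge h n k : (k < n)%nat -> (h k <= nmax h n)%nat.
Proof. induction n; intros Hk; simpl. lia. destruct (Nat.eq_dec k n). subst; lia.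
  specialize (IHn ltac:(lia)). lia. Qed.

Lemma mono_seq (x : nat -> R) n : (forall k, (k < n)%nat -> x k <= x (S k)) ->
  forall i j, (i <= j <= n)%nat -> x i <= x j.
Proof. intros H i j Hij. induction j. replace i with O by lia. lra.
  destruct (Nat.eq_dec i (S j)). subst; lra. specialize (IHj ltac:(lia)). specialize (H j ltac:(lia)). lra. Qed.

Definition ACg (g : R -> R) : Prop :=
  forall eps, 0 < eps -> exists eta, 0 < eta /\ forall n (a b : nat -> R),
    (forall k, (k < n)%nat -> 0 <= a k /\ a k <= b k /\ b k <= 1) ->
    (forall k, (S k < n)%nat -> b k <= a (S k)) ->
    rsum (fun k => b k - a k) n < eta ->
    rsum (fun k => g (b k) - g (a k)) n < eps.

Definition straddle_ok (f g : R -> R) (E : R -> Prop) : Prop :=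
  forall t, 0 <= t <= 1 -> ~ E t -> forall eps, 0 < eps -> exists r, 0 < r /\
    forall u v, 0 <= u -> u <= t -> t <= v -> v <= 1 -> t - r < u -> v < t + r ->
      g v - g u <= (f t + eps) * (v - u).

Definition lev (z : R) : nat := Z.to_nat (up (Rabs z)).
Lemma lev_ge z : Rabs z <= INR (lev z).
Proof. unfold lev. destruct (archimed (Rabs z)) as [H1 H2]. pose proof (Rabs_pos z).
  rewrite INR_IZR_INZ. rewrite Z2Nat.id. lra. apply le_IZR. simpl. lra. Qed.

Definition clampR (A B z : R) : R := Rmax A (Rmin B z).
Lemma clampR_mono A B z w : z <= w -> clampR A B z <= clampR A B w.
Proof. intros. unfold clampR. apply Rle_max_compat_l. apply Rle_min_compat_l. auto. Qed.
Lemma clampR_in A B z : A <= z <= B -> clampR A B z = z.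
Proof. intros. unfold clampR. rewrite Rmin_right by lra. rewrite Rmax_right by lra. auto. Qed.
Lemma clampR_diff A B z w : A <= B -> clampR A B w - clampR A B z <= B - A.
Proof. intros. unfold clampR, Rmax, Rmin. repeat destruct Rle_dec; lra. Qed.

Lemma ftc_ineq (f g : R -> R) (c : R) (E : R -> Prop) :
  mcshane01 f c -> negligible E -> ACg g -> straddle_ok f g E -> g 1 - g 0 <= c.
Proof.
  intros Hmc HE Hac Hst.
  assert (Hmain : forall eps, 0 < eps -> g 1 - g 0 <= c + 4 * eps).
  2:{ destruct (Rle_lt_dec (g 1 - g 0) c) as [|Hlt]; auto.
      specialize (Hmain ((g 1 - g 0 - c) / 8) ltac:(lra)). lra. }
  intros eps Heps.
  destruct (Hmc eps Heps) as [d1 [Hd1 Hsum]].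
  destruct (Hac eps Heps) as [eta [Heta Hacp]].
  set (eta' := Rmin (eta / 2) eps).
  assert (Heta' : 0 < eta') by (unfold eta'; apply Rmin_case; lra).
  assert (Heta'2 : eta' <= eta / 2) by apply Rmin_l.
  assert (Heta'3 : eta' <= eps) by apply Rmin_r.
  set (etan := fun l : nat => eta' * (/2)^(S l) / (1 + INR l)).
  assert (Hp2 : forall l, 0 < (/2)^l) by (intros; apply pow_lt; lra).
  assert (Hetan : forall l, 0 < etan l).
  { intros l. unfold etan. pose proof (pos_INR l). pose proof (Hp2 (S l)). apply Rdiv_lt_0_compat; nra. }
  set (Pcov := fun l (ab : (nat -> R) * (nat -> R)) =>
     (forall n, fst ab n <= snd ab n) /\ (forall t, E t -> exists n, fst ab n < t < snd ab n) /\
     (forall n, sum_f_R0 (fun k => snd ab k - fst ab k) n <= etan l)).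
  set (cov := fun l => epsilon (inhabits ((fun _ : nat => 0), (fun _ : nat => 0))) (Pcov l)).
  assert (Hcov : forall l, Pcov l (cov l)).
  { intros l. unfold cov. apply epsilon_spec. destruct (HE (etan l) (Hetan l)) as [a [b Hab]].
    exists (a, b). exact Hab. }
  set (A := fun l m => fst (cov l) m). set (B := fun l m => snd (cov l) m).
  assert (HAB : forall l m, A l m <= B l m) by (intros; apply (Hcov l)).
  set (mi := fun t => epsilon (inhabits O) (fun m => A (lev (f t)) m < t < B (lev (f t)) m)).
  assert (Hmi : forall t, E t -> A (lev (f t)) (mi t) < t < B (lev (f t)) (mi t)).
  { intros t Ht. unfold mi. apply (epsilon_spec (inhabits O) (fun m => A (lev (f t)) m < t < B (lev (f t)) m)).
    destruct (Hcov (lev (f t))) as [_ [Hc _]]. apply Hc; auto. }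
  set (Pr := fun t r => 0 < r /\ forall u v, 0 <= u -> u <= t -> t <= v -> v <= 1 -> t - r < u -> v < t + r ->
      g v - g u <= (f t + eps) * (v - u)).
  set (rr := fun t => epsilon (inhabits 1) (Pr t)).
  assert (Hrr : forall t, 0 <= t <= 1 -> ~ E t -> Pr t (rr t)).
  { intros t Ht HnE. unfold rr. apply epsilon_spec. apply (Hst t Ht HnE eps Heps). }
  set (delta := fun t => if excluded_middle_informative (E t)
      then Rmin (d1 t) (Rmin (t - A (lev (f t)) (mi t)) (B (lev (f t)) (mi t) - t))
      else Rmin (d1 t) (rr t)).
  assert (Hdelta : forall t, 0 <= t <= 1 -> 0 < delta t).
  { intros t Ht. unfold delta. destruct excluded_middle_informative as [HEt|HEt].
    - specialize (Hmi t HEt). specialize (Hd1 t Ht). repeat apply Rmin_case; lra.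
    - destruct (Hrr t Ht HEt) as [Hr _]. specialize (Hd1 t Ht). apply Rmin_case; lra. }
  destruct (cousin delta Hdelta) as [n [x [tg [Hx0 [Hxn [Hxt Hfine]]]]]].
  assert (Hxm : forall k, (k < n)%nat -> x k <= x (S k)) by (intros k Hk; specialize (Hxt k Hk); lra).
  assert (Hx01 : forall k, (k <= n)%nat -> 0 <= x k <= 1).
  { intros k Hk. rewrite <- Hx0, <- Hxn. split; apply (mono_seq x n Hxm); lia. }
  assert (Htg01 : forall k, (k < n)%nat -> 0 <= tg k <= 1).
  { intros k Hk. specialize (Hxt k Hk). pose proof (Hx01 k ltac:(lia)). pose proof (Hx01 (S k) ltac:(lia)). lra. }
  assert (Hd1le : forall t, delta t <= d1 t).
  { intros t. unfold delta. destruct excluded_middle_informative; apply Rmin_l. }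
  assert (HS : Rabs (rsum (fun k => f (tg k) * (x (S k) - x k)) n - c) < eps).
  { apply Hsum; auto. intros k Hk. specialize (Hfine k Hk). specialize (Hd1le (tg k)). repeat split; try apply Htg01; auto; lra. }
  set (wE := fun k => if excluded_middle_informative (E (tg k)) then (1 + INR (lev (f (tg k)))) * (x (S k) - x k) else 0).
  assert (HwE : rsum wE n <= eta').
  { set (Lm := S (nmax (fun k => lev (f (tg k))) n)). set (Mm := S (nmax (fun k => mi (tg k)) n)).
    set (T := fun l m k => clampR (A l m) (B l m) (x (S k)) - clampR (A l m) (B l m) (x k)).
    assert (HT : forall l m k, (k < n)%nat -> 0 <= T l m k).
    { intros. unfold T. pose proof (clampR_mono (A l m) (B l m) _ _ (Hxm k H)). lra. }
    apply Rle_trans with (rsum (fun k => rsum (fun l => rsum (fun m => (1 + INR l) * T l m k) Mm) Lm) n).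
    - apply rsum_le. intros k Hk. unfold wE. destruct excluded_middle_informative as [HEt|HEt].
      + set (l0 := lev (f (tg k))). set (m0 := mi (tg k)).
        assert (HT0 : T l0 m0 k = x (S k) - x k).
        { unfold T. specialize (Hmi _ HEt). specialize (Hfine k Hk). unfold delta in Hfine.
          destruct excluded_middle_informative; [|tauto].
          assert (Hm1 : Rmin (d1 (tg k)) (Rmin (tg k - A (lev (f (tg k))) (mi (tg k))) (B (lev (f (tg k))) (mi (tg k)) - tg k)) <= tg k - A l0 m0).
          { eapply Rle_trans. apply Rmin_r. apply Rmin_l. }
          assert (Hm2 : Rmin (d1 (tg k)) (Rmin (tg k - A (lev (f (tg k))) (mi (tg k))) (B (lev (f (tg k))) (mi (tg k)) - tg k)) <= B l0 m0 - tg k).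
          { eapply Rle_trans. apply Rmin_r. apply Rmin_r. }
          pose proof (Hxm k Hk).
          rewrite !clampR_in; try lra. }
        apply Rle_trans with (rsum (fun m => (1 + INR l0) * T l0 m k) Mm).
        * apply Rle_trans with ((1 + INR l0) * T l0 m0 k). rewrite HT0; lra.
          apply (rsum_ge_term (fun m => (1 + INR l0) * T l0 m k)).
          intros; apply Rmult_le_pos; [pose proof (pos_INR l0); lra| auto].
          unfold Mm, m0. pose proof (nmax_ge (fun k => mi (tg k)) n k Hk). simpl in H. lia.
        * apply (rsum_ge_term (fun l => rsum (fun m => (1 + INR l) * T l m k) Mm)).
          intros; apply rsum_nonneg; intros; apply Rmult_le_pos; [pose proof (pos_INR k0); lra| auto].
          unfold Lm, l0. pose proof (nmax_ge (fun k => lev (f (tg k))) n k Hk). simpl in H. lia.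
      + apply rsum_nonneg; intros; apply rsum_nonneg; intros; apply Rmult_le_pos; [pose proof (pos_INR k0); lra| auto].
    - rewrite (rsum_exchange (fun k l => rsum (fun m => (1 + INR l) * T l m k) Mm)).
      apply Rle_trans with (rsum (fun l => eta' * (/2)^(S l)) Lm).
      2:{ rewrite geom_sum. specialize (Hp2 Lm). nra. }
      apply rsum_le. intros l Hl.
      rewrite (rsum_exchange (fun k m => (1 + INR l) * T l m k)).
      apply Rle_trans with (rsum (fun m => (1 + INR l) * (B l m - A l m)) Mm).
      { apply rsum_le. intros m Hm. rewrite rsum_scal. apply Rmult_le_compat_l. pose proof (pos_INR l); lra.
        unfold T. rewrite (rsum_tele (fun k => clampR (A l m) (B l m) (x k))). apply clampR_diff; auto. }
      rewrite rsum_scal. destruct (Hcov l) as [_ [_ Hc3]]. specialize (Hc3 (pred Mm)).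
      rewrite sum_rsum in Hc3. replace (S (pred Mm)) with Mm in Hc3 by (unfold Mm; simpl; lia).
      fold A B in Hc3. unfold etan in Hc3.
      pose proof (pos_INR l).
      apply Rle_trans with ((1 + INR l) * (eta' * (/ 2) ^ S l / (1 + INR l))).
      apply Rmult_le_compat_l; [lra| exact Hc3].
      right. field. lra. }
  set (bE := fun k => if excluded_middle_informative (E (tg k)) then g (x (S k)) - g (x k) else 0).
  assert (Hterm : forall k, (k < n)%nat -> g (x (S k)) - g (x k) <=
     f (tg k) * (x (S k) - x k) + eps * (x (S k) - x k) + bE k + wE k).
  { intros k Hk. unfold bE, wE. pose proof (Hxm k Hk) as Hm. destruct excluded_middle_informative as [HEt|HEt].
    - pose proof (lev_ge (f (tg k))). pose proof (Rle_abs (- f (tg k))). rewrite Rabs_Ropp in H0.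
      assert (0 <= (f (tg k) + eps + (1 + INR (lev (f (tg k))))) * (x (S k) - x k)) by (apply Rmult_le_pos; lra).
      lra.
    - destruct (Hrr (tg k) (Htg01 k Hk) HEt) as [Hr Hs]. specialize (Hfine k Hk). specialize (Hxt k Hk).
      unfold delta in Hfine. destruct excluded_middle_informative; [tauto|].
      pose proof (Rmin_r (d1 (tg k)) (rr (tg k))).
      assert (g (x (S k)) - g (x k) <= (f (tg k) + eps) * (x (S k) - x k)).
      { apply Hs; try lra. apply Hx01; lia. apply Hx01; lia. }
      lra. }
  assert (H1 : g 1 - g 0 <= rsum (fun k => f (tg k) * (x (S k) - x k)) n + eps * rsum (fun k => x (S k) - x k) n + rsum bE n + rsum wE n).
  { rewrite <- Hx0, <- Hxn. rewrite <- (rsum_tele (fun k => g (x k))). rewrite <- rsum_scal, <- !rsum_plus.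
    apply rsum_le. exact Hterm. }
  rewrite (rsum_tele x) in H1. rewrite Hx0, Hxn in H1.
  assert (HbE : rsum bE n < eps).
  { rewrite (rsum_ext bE (fun k => g (if excluded_middle_informative (E (tg k)) then x (S k) else x k) - g (x k))).
    2:{ intros k Hk. unfold bE. destruct excluded_middle_informative; lra. }
    apply (Hacp n x (fun k => if excluded_middle_informative (E (tg k)) then x (S k) else x k)).
    - intros k Hk. pose proof (Hxm k Hk). pose proof (Hx01 k ltac:(lia)). pose proof (Hx01 (S k) ltac:(lia)).
      destruct excluded_middle_informative; lra.
    - intros k Hk. pose proof (Hxm k ltac:(lia)). destruct excluded_middle_informative; lra.
    - apply Rle_lt_trans with (rsum wE n); [|lra]. apply rsum_le. intros k Hk. unfold wE.
      pose proof (Hxm k Hk). pose proof (pos_INR (lev (f (tg k)))).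
      destruct excluded_middle_informative; nra. }
  apply Rabs_lt_iff in HS. lra.
Qed.


Lemma psub_sym_norm u v : pnorm (psub u v) = pnorm (psub v u).
Proof. unfold pnorm, dot, psub; simpl. f_equal. ring. Qed.
Lemma pnorm_zero : pnorm pzero = 0.
Proof. unfold pnorm, dot, pzero; simpl. replace (0*0+0*0) with 0 by ring. apply sqrt_0. Qed.
Lemma psub_zero_r u : psub u pzero = u.
Proof. destruct u; unfold psub, pzero; simpl. f_equal; ring. Qed.
Lemma psub_tri u v w : pnorm (psub u w) <= pnorm (psub u v) + pnorm (psub v w).
Proof. replace (psub u w) with (padd (psub u v) (psub v w)). apply pnorm_triangle.
  unfold padd, psub; simpl. f_equal; ring. Qed.
Lemma pnorm_eq0 u : pnorm u = 0 -> u = pzero.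
Proof. intros H. pose proof (pnorm_sq u). rewrite H in H0. destruct u as [a b]. unfold dot in H0; simpl in H0.
  unfold pzero. f_equal; nra. Qed.
Lemma dot_scal_l t u v : dot (scal t u) v = t * dot u v.
Proof. unfold dot, scal; simpl; ring. Qed.
Lemma coord_lin_bound (u v w : pt) : pnorm w = 1 -> Rabs (dot (psub u v) w) <= pnorm (psub u v).
Proof. intros H. pose proof (cauchy_schwarz (psub u v) w). rewrite H in H0. lra. Qed.

Section Geo.
Variable N : nat.
Variable e : nat -> pt.
Hypothesis HN : (1 <= N)%nat.
Hypothesis He1 : forall i, (i < N)%nat -> pnorm (e i) = 1.
Hypothesis Hinj : forall i j, (i < N)%nat -> (j < N)%nat -> e i = e j -> i = j.

Lemma unit_dot i : (i < N)%nat -> dot (e i) (e i) = 1.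
Proof. intros. rewrite <- pnorm_sq, He1 by auto. ring. Qed.
Lemma coord_scal i t : (i < N)%nat -> coord e i (scal t (e i)) = t.
Proof. intros. unfold coord. rewrite dot_scal_l, unit_dot by auto. ring. Qed.
Lemma coord_zero i : coord e i pzero = 0.
Proof. unfold coord, dot, pzero; simpl; ring. Qed.
Lemma scal_zero u : scal 0 u = pzero.
Proof. unfold scal, pzero. f_equal; ring. Qed.
Lemma scal_inj i a b : (i < N)%nat -> scal a (e i) = scal b (e i) -> a = b.
Proof. intros Hi H. rewrite <- (coord_scal i a), <- (coord_scal i b), H; auto. Qed.
Lemma pnorm_scal_e i a : (i < N)%nat -> 0 <= a -> pnorm (scal a (e i)) = a.
Proof. intros. rewrite pnorm_scal, He1 by auto. rewrite Rabs_pos_eq by auto. ring. Qed.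
Lemma scal_e_zero i a : (i < N)%nat -> scal a (e i) = pzero -> a = 0.
Proof. intros Hi H. rewrite <- (scal_zero (e i)) in H. apply scal_inj in H; auto. Qed.

Lemma dot_lt1 i k : (i < N)%nat -> (k < N)%nat -> i <> k -> dot (e i) (e k) < 1.
Proof. intros Hi Hk Hik. destruct (Rlt_le_dec (dot (e i) (e k)) 1) as [|Hge]; auto. exfalso. apply Hik.
  apply Hinj; auto. pose proof (unit_dot i Hi); pose proof (unit_dot k Hk).
  assert (dot (psub (e i) (e k)) (psub (e i) (e k)) = 0).
  { assert (dot (psub (e i) (e k)) (psub (e i) (e k)) = dot (e i) (e i) - 2 * dot (e i) (e k) + dot (e k) (e k)) by (unfold dot, psub; simpl; ring).
    pose proof (dot_nonneg (psub (e i) (e k))). lra. }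
  destruct (e i) as [a b], (e k) as [c d]. unfold dot, psub in H1; simpl in H1.
  pose proof (Rle_0_sqr (a - c)). pose proof (Rle_0_sqr (b - d)). unfold Rsqr in *.
  assert ((a - c) * (a - c) = 0) by lra. assert ((b - d) * (b - d) = 0) by lra.
  apply Rmult_integral in H4. apply Rmult_integral in H5. f_equal; lra. Qed.

Lemma kappa_ex : exists kp, 0 < kp <= 1 /\ forall i k, (i < N)%nat -> (k < N)%nat -> i <> k -> dot (e i) (e k) <= 1 - kp.
Proof.
  assert (Hrow : forall i, (i < N)%nat -> forall m, exists kp, 0 < kp <= 1 /\ forall k, (k < m)%nat -> (k < N)%nat -> i <> k -> dot (e i) (e k) <= 1 - kp).
  { intros i Hi m. induction m. exists 1. split. lra. intros; lia.
    destruct IHm as [kp [Hkp H]].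
    destruct (classic ((m < N)%nat /\ i <> m)) as [[Hm Him]|Hm].
    - pose proof (dot_lt1 i m Hi Hm Him). exists (Rmin kp (1 - dot (e i) (e m))). split.
      split. apply Rmin_case; lra. eapply Rle_trans. apply Rmin_l. lra.
      intros k Hk HkN Hik. destruct (Nat.eq_dec k m). subst. pose proof (Rmin_r kp (1 - dot (e i) (e m))). lra.
      pose proof (H k ltac:(lia) HkN Hik). pose proof (Rmin_l kp (1 - dot (e i) (e m))). lra.
    - exists kp. split; auto. intros k Hk HkN Hik. destruct (Nat.eq_dec k m). subst. exfalso; apply Hm; auto.
      apply H; auto. lia. }
  assert (forall n, exists kp, 0 < kp <= 1 /\ forall i k, (i < n)%nat -> (i < N)%nat -> (k < N)%nat -> i <> k -> dot (e i) (e k) <= 1 - kp).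
  { induction n. exists 1. split. lra. intros; lia.
    destruct IHn as [kp [Hkp H]].
    destruct (Compare_dec.le_lt_dec N n).
    - exists kp. split; auto. intros. apply H; auto. lia.
    - destruct (Hrow n l N) as [kp' [Hkp' H']]. exists (Rmin kp kp'). split. split. apply Rmin_case; lra.
      eapply Rle_trans. apply Rmin_l. lra.
      intros i k Hi HiN HkN Hik. destruct (Nat.eq_dec i n). subst. pose proof (H' k HkN HkN Hik). pose proof (Rmin_r kp kp'). lra.
      pose proof (H i k ltac:(lia) HiN HkN Hik). pose proof (Rmin_l kp kp'). lra. }
  destruct (H N) as [kp [Hkp H']]. exists kp. split; auto. Qed.

Definition sepc : R := sqrt ((epsilon (inhabits 1) (fun kp => 0 < kp <= 1 /\ forall i k, (i < N)%nat -> (k < N)%nat -> i <> k -> dot (e i) (e k) <= 1 - kp)) / 2).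

Lemma sepc_spec : 0 < sepc <= 1 /\ forall i k a b, (i < N)%nat -> (k < N)%nat -> i <> k -> 0 <= a -> 0 <= b ->
  sepc * (a + b) <= pnorm (psub (scal a (e i)) (scal b (e k))).
Proof.
  unfold sepc. set (kp := epsilon _ _). assert (Hk : 0 < kp <= 1 /\ forall i k, (i < N)%nat -> (k < N)%nat -> i <> k -> dot (e i) (e k) <= 1 - kp).
  { unfold kp. apply epsilon_spec. apply kappa_ex. }
  destruct Hk as [Hk1 Hk2]. clearbody kp.
  assert (Hs : sqrt (kp/2) * sqrt (kp/2) = kp/2) by (apply sqrt_sqrt; lra).
  assert (Hs0 : 0 < sqrt (kp/2)) by (apply sqrt_lt_R0; lra).
  split. split; auto. assert (sqrt (kp/2) <= 1). { rewrite <- sqrt_1. apply sqrt_le_1_alt. lra. } lra.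
  intros i k a b Hi Hk Hik Ha Hb. apply pnorm_ge_sq. apply Rmult_le_pos; lra.
  replace (dot (psub (scal a (e i)) (scal b (e k))) (psub (scal a (e i)) (scal b (e k)))) with
    (a * a * dot (e i) (e i) + b * b * dot (e k) (e k) - 2 * a * b * dot (e i) (e k)) by (unfold dot, scal, psub; simpl; ring).
  rewrite !unit_dot by auto. pose proof (Hk2 i k Hi Hk Hik).
  assert (Eq : sqrt (kp / 2) * (a + b) * (sqrt (kp / 2) * (a + b)) = kp / 2 * (a+b) * (a+b)).
  { transitivity (sqrt (kp/2) * sqrt (kp/2) * (a+b) * (a+b)). ring. rewrite Hs. ring. }
  rewrite Eq.
  assert (0 <= a * b) by (apply Rmult_le_pos; auto).
  assert (a * a + b * b - 2 * a * b * (1 - kp) - kp / 2 * (a + b) * (a + b) = (1 - kp/2) * ((a - b) * (a - b))) by (clear; field).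
  assert (0 <= (1 - kp/2) * ((a - b) * (a - b))) by (apply Rmult_le_pos; [lra| apply Rle_0_sqr]).
  nra.
Qed.

Lemma same_branch_dist i a b : (i < N)%nat -> pnorm (psub (scal a (e i)) (scal b (e i))) = Rabs (a - b).
Proof. intros Hi. replace (psub (scal a (e i)) (scal b (e i))) with (scal (a - b) (e i)) by (unfold scal, psub; simpl; f_equal; ring).
  rewrite pnorm_scal, He1 by auto. ring. Qed.

Lemma inJstar_pos i z : inJstar e i z -> exists a, 0 < a /\ z = scal a (e i).
Proof. auto. Qed.

Lemma inJstar_unique i k z : (i < N)%nat -> (k < N)%nat -> inJstar e i z -> inJstar e k z -> i = k.
Proof. intros Hi Hk [a [Ha ->]] [b [Hb Heq]]. destruct (Nat.eq_dec i k); auto. exfalso.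
  destruct sepc_spec as [Hs1 Hs2]. specialize (Hs2 i k a b Hi Hk n ltac:(lra) ltac:(lra)).
  rewrite Heq in Hs2. replace (psub (scal b (e k)) (scal b (e k))) with pzero in Hs2 by (unfold psub, pzero; f_equal; ring).
  rewrite pnorm_zero in Hs2. nra. Qed.

Lemma inJstar_nz i : (i < N)%nat -> ~ inJstar e i pzero.
Proof. intros Hi [a [Ha H]]. symmetry in H. apply scal_e_zero in H; auto. lra. Qed.

Lemma local_branch i a w : (i < N)%nat -> 0 < a -> inJ N e w -> pnorm (psub w (scal a (e i))) < sepc * a -> inJstar e i w.
Proof. intros Hi Ha [k [Hk [b [Hb ->]]]] Hd. destruct sepc_spec as [Hs1 Hs2].
  destruct (Nat.eq_dec k i).
  - subst k. destruct (Req_dec b 0). subst b. rewrite same_branch_dist in Hd by auto.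
    rewrite Rabs_left in Hd by lra. nra. exists b. split; auto. lra.
  - specialize (Hs2 k i b a Hk Hi n Hb ltac:(lra)). nra. Qed.

Definition br (z : pt) : nat := epsilon (inhabits O) (fun k => (k < N)%nat /\ inJi e k z).
Lemma br_spec z : inJ N e z -> (br z < N)%nat /\ inJi e (br z) z.
Proof. intros H. unfold br. apply epsilon_spec. auto. Qed.
Lemma br_star i z : (i < N)%nat -> inJstar e i z -> br z = i.
Proof. intros Hi Hz. assert (HJ : inJ N e z).
  { exists i. split; auto. destruct Hz as [a [Ha Hz]]. exists a. split; auto; lra. }
  destruct (br_spec z HJ) as [Hb [b [Hb0 Hbz]]].
  destruct (Req_dec b 0). subst b. rewrite scal_zero in Hbz. exfalso. apply (inJstar_nz i Hi). rewrite <- Hbz. auto.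
  apply (inJstar_unique (br z) i z); auto. exists b; split; auto; lra. Qed.

Definition phi (s : nat -> R) (z : pt) : R := s (br z) * coord e (br z) z.

Lemma phi_branch s i a : (i < N)%nat -> 0 <= a -> phi s (scal a (e i)) = s i * a.
Proof. intros Hi Ha. destruct (Req_dec a 0). subst a. unfold phi. rewrite scal_zero, coord_zero. ring.
  unfold phi. rewrite (br_star i). rewrite coord_scal; auto. auto. exists a; split; auto; lra. Qed.

Lemma bound_fin_gen (s : nat -> R) n : exists Sb, 0 <= Sb /\ forall k, (k < n)%nat -> Rabs (s k) <= Sb.
Proof. induction n as [|m IH]. exists 0. split. lra. intros; lia.
  destruct IH as [Sb [HS H]]. exists (Rmax Sb (Rabs (s m))). split. eapply Rle_trans; [apply HS| apply Rmax_l].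
  intros k Hk. destruct (Nat.eq_dec k m). subst; apply Rmax_r. eapply Rle_trans; [apply H; lia| apply Rmax_l]. Qed.

Lemma phi_lip s : exists B, 0 <= B /\ forall z w, inJ N e z -> inJ N e w -> Rabs (phi s z - phi s w) <= B * pnorm (psub z w).
Proof.
  destruct (bound_fin_gen s N) as [Sb [HS Hsb]]. destruct sepc_spec as [[Hs0 Hs1] Hs2].
  exists (Sb / sepc). split. apply Rdiv_le_0_compat; lra.
  intros z w [i [Hi [a [Ha ->]]]] [k [Hk [b [Hb ->]]]]. rewrite !phi_branch by auto.
  destruct (Nat.eq_dec i k).
  - subst k. rewrite same_branch_dist by auto. replace (s i * a - s i * b) with (s i * (a - b)) by ring.
    rewrite Rabs_mult. specialize (Hsb i Hi). pose proof (Rabs_pos (a - b)).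
    assert (Sb <= Sb / sepc). { unfold Rdiv. rewrite <- (Rmult_1_r Sb) at 1. apply Rmult_le_compat_l; auto.
      rewrite <- Rinv_1. apply Rinv_le_contravar; lra. }
    pose proof (Rabs_pos (s i)). nra.
  - specialize (Hs2 i k a b Hi Hk n Ha Hb).
    apply Rle_trans with (Sb * (a + b)).
    + eapply Rle_trans. apply Rabs_triang. rewrite Rabs_Ropp, !Rabs_mult, (Rabs_pos_eq a), (Rabs_pos_eq b) by auto.
      pose proof (Hsb i Hi). pose proof (Hsb k Hk). nra.
    + apply Rle_trans with (Sb / sepc * (sepc * (a + b))).
      right. field. lra. apply Rmult_le_compat_l; auto. apply Rdiv_le_0_compat; lra.
Qed.

Lemma phi_zero s : phi s pzero = 0.
Proof. unfold phi. rewrite coord_zero. ring. Qed.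

Lemma zero_inJ : inJ N e pzero.
Proof. exists O. split. lia. exists 0. split. lra. rewrite scal_zero. auto. Qed.

End Geo.


Lemma convex_tangent_ex gamma f : 0 < gamma -> C2_convex gamma f ->
  exists f1 : R -> R, forall p q, f q + f1 q * (p - q) <= f p.
Proof.
  intros Hg [f1 [f2 [H1 [H2 [_ H4]]]]]. exists f1.
  assert (Hmono : forall a b, a <= b -> f1 a <= f1 b).
  { intros a b Hab. destruct (Req_dec a b). subst; lra.
    destruct (MVT_cor2 f1 f2 a b ltac:(lra) (fun c _ => H2 c)) as [c [Hc _]].
    specialize (H4 c). nra. }
  intros p q. destruct (Rtotal_order p q) as [Hlt|[Heq|Hgt]].
  - destruct (MVT_cor2 f f1 p q Hlt (fun c _ => H1 c)) as [c [Hc Hc2]].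
    pose proof (Hmono c q ltac:(lra)). nra.
  - subst. lra.
  - destruct (MVT_cor2 f f1 q p Hgt (fun c _ => H1 c)) as [c [Hc Hc2]].
    pose proof (Hmono q c ltac:(lra)). nra.
Qed.

Definition Ld (f : R -> R) : R -> R :=
  epsilon (inhabits (fun _ => 0)) (fun f1 => forall p q, f q + f1 q * (p - q) <= f p).

Lemma Ld_spec gamma f : 0 < gamma -> C2_convex gamma f -> forall p q, f q + Ld f q * (p - q) <= f p.
Proof. intros Hg Hc. unfold Ld. apply (epsilon_spec (inhabits (fun _ => 0)) (fun f1 => forall p q, f q + f1 q * (p - q) <= f p)).
  eapply convex_tangent_ex; eauto. Qed.

Lemma Lmin_le L n k p : (k <= n)%nat -> Lmin L n p <= L k p.
Proof. induction n; intros Hk; simpl. replace k with O by lia. lra.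
  destruct (Nat.eq_dec k (S n)). subst. apply Rmin_r. eapply Rle_trans. apply Rmin_l. apply IHn. lia. Qed.
Lemma Lmin_attained L n p : exists k, (k <= n)%nat /\ Lmin L n p = L k p.
Proof. induction n; simpl. exists O. auto. destruct IHn as [k [Hk Hk2]].
  apply Rmin_case_strong; intros. exists k. split; auto. exists (S n). auto. Qed.
Lemma L0_le N L k p : (k < N)%nat -> L0 N L p <= L k p.
Proof. intros. unfold L0. apply Lmin_le. lia. Qed.
Lemma L0_attained N L p : (1 <= N)%nat -> exists k, (k < N)%nat /\ L0 N L p = L k p.
Proof. intros. unfold L0. destruct (Lmin_attained L (N-1) p) as [k [Hk Hk2]]. exists k. split; auto. lia. Qed.


Lemma dlin f1 f2 t l1 l2 a b1 b2 : derivable_pt_lim f1 t l1 -> derivable_pt_lim f2 t l2 ->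
  derivable_pt_lim (fun s => a * s + b1 * f1 s + b2 * f2 s) t (a + b1 * l1 + b2 * l2).
Proof. intros H1 H2.
  apply (derivable_pt_lim_plus (fun s => a * s + b1 * f1 s) (fun s => b2 * f2 s)).
  apply (derivable_pt_lim_plus (fun s => a * s) (fun s => b1 * f1 s)).
  assert (H : derivable_pt_lim (fun s => a * s) t (a * 1)).
  { apply (derivable_pt_lim_scal id a t 1). apply derivable_pt_lim_id. }
  rewrite Rmult_1_r in H. exact H.
  apply (derivable_pt_lim_scal f1 b1 t l1). auto.
  apply (derivable_pt_lim_scal f2 b2 t l2). auto.
Qed.

Lemma deriv_bound h t d : derivable_pt_lim h t d -> forall eps, 0 < eps -> exists r, 0 < r /\
  forall k, Rabs k < r -> Rabs (h (t + k) - h t - d * k) <= eps * Rabs k.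
Proof. intros H eps Heps. destruct (H eps Heps) as [r Hr]. exists r. split. apply cond_pos.
  intros k Hk. destruct (Req_dec k 0). subst. replace (t + 0) with t by ring. rewrite Rabs_R0.
  replace (h t - h t - d * 0) with 0 by ring. rewrite Rabs_R0. lra.
  specialize (Hr k H0 Hk). replace (h (t + k) - h t - d * k) with (((h (t + k) - h t) / k - d) * k) by (field; auto).
  rewrite Rabs_mult. pose proof (Rabs_pos k). nra. Qed.

Lemma straddle_deriv h t d : derivable_pt_lim h t d -> forall eps, 0 < eps -> exists r, 0 < r /\
  forall u v, u <= t -> t <= v -> t - r < u -> v < t + r -> h v - h u <= (d + eps) * (v - u).
Proof. intros H eps Heps. destruct (deriv_bound h t d H eps Heps) as [r [Hr Hb]]. exists r. split; auto.
  intros u v Hu Hv Hu' Hv'.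
  pose proof (Hb (v - t) ltac:(apply Rabs_lt_iff; lra)). pose proof (Hb (u - t) ltac:(apply Rabs_lt_iff; lra)).
  replace (t + (v - t)) with v in H0 by ring. replace (t + (u - t)) with u in H1 by ring.
  rewrite (Rabs_pos_eq (v - t)) in H0 by lra. rewrite (Rabs_left1 (u - t)) in H1 by lra.
  apply Rabs_le_iff in H0. apply Rabs_le_iff in H1. nra. Qed.

Definition cont01 (X : R -> pt) : Prop :=
  forall t, 0 <= t <= 1 -> forall eps, 0 < eps -> exists d, 0 < d /\
    forall s, 0 <= s <= 1 -> Rabs (s - t) < d -> pnorm (psub (X s) (X t)) < eps.

Lemma ac_cont X : abs_cont01 X -> cont01 X.
Proof. intros H t Ht eps Heps. destruct (H eps Heps) as [d [Hd Hf]]. exists d. split; auto.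
  intros s Hs Hst. destruct (Rle_dec t s).
  - specialize (Hf 1%nat (fun _ => t) (fun _ => s)). simpl in Hf.
    assert (0 + pnorm (psub (X s) (X t)) < eps). apply Hf. intros; lra. intros; lia.
      apply Rabs_lt_iff in Hst; lra. lra.
  - specialize (Hf 1%nat (fun _ => s) (fun _ => t)). simpl in Hf. rewrite psub_sym_norm.
    assert (0 + pnorm (psub (X t) (X s)) < eps). apply Hf. intros; split; lra. intros; lia.
      apply Rabs_lt_iff in Hst; lra. lra.
Qed.

Lemma interval_connected (a b : R) (P : R -> Prop) : a <= b -> P a ->
  (forall t, a <= t <= b -> P t -> exists r, 0 < r /\ forall s, a <= s <= b -> Rabs (s - t) < r -> P s) ->
  (forall t, a <= t <= b -> (forall r, 0 < r -> exists s, a <= s <= b /\ Rabs (s - t) < r /\ P s) -> P t) ->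
  forall t, a <= t <= b -> P t.
Proof.
  intros Hab Pa Hopen Hclosed.
  set (E := fun s => a <= s <= b /\ forall u, a <= u <= s -> P u).
  assert (Ea : E a). { split. lra. intros u Hu. replace u with a by lra. auto. }
  assert (Hb : bound E) by (exists b; intros s [Hs _]; lra).
  destruct (completeness E Hb (ex_intro _ a Ea)) as [sg [Hub Hlub]].
  assert (Hsa : a <= sg) by (apply Hub; auto).
  assert (Hsb : sg <= b) by (apply Hlub; intros s [Hs _]; lra).
  assert (Happ : forall r, 0 < r -> exists s, E s /\ sg - r < s /\ s <= sg).
  { intros r Hr. apply NNPP. intros Hn. assert (sg <= sg - r). apply Hlub. intros s Hs.
    destruct (Rle_lt_dec s (sg - r)); auto. exfalso; apply Hn. exists s. split. auto. split. lra. apply Hub; auto. lra. }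
  assert (Hbelow : forall u, a <= u < sg -> P u).
  { intros u Hu. destruct (Happ (sg - u) ltac:(lra)) as [s [[_ Hs] [Hs1 Hs2]]]. apply Hs. lra. }
  assert (Psg : P sg).
  { apply Hclosed. lra. intros r Hr. destruct (Happ r Hr) as [s [[Hs1 Hs2] [Hs3 Hs4]]].
    exists s. split. lra. split. apply Rabs_lt_iff; lra. apply Hs2; lra. }
  assert (Hsg : sg = b).
  { destruct (Req_dec sg b); auto. exfalso.
    destruct (Hopen sg ltac:(lra) Psg) as [r [Hr Hr2]].
    set (sg' := Rmin b (sg + r / 2)).
    assert (E sg').
    { split. split; unfold sg'; [apply Rmin_case; lra| apply Rmin_l].
      intros u Hu. destruct (Rlt_le_dec u sg). apply Hbelow; lra.
      apply Hr2. split. lra. assert (sg' <= b) by apply Rmin_l. lra.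
      apply Rabs_lt_iff. assert (sg' <= sg + r/2) by apply Rmin_r. lra. }
    assert (sg' <= sg) by (apply Hub; auto). unfold sg' in H1. revert H1. apply Rmin_case; lra. }
  intros t Ht. destruct (Req_dec t b) as [Htb|Htb]. rewrite Htb, <- Hsg. auto. apply Hbelow. lra.
Qed.

Lemma last_zero (X : R -> pt) : cont01 X -> (exists t, 0 <= t <= 1 /\ X t = pzero) ->
  exists s, 0 <= s <= 1 /\ X s = pzero /\ forall t, s < t <= 1 -> X t <> pzero.
Proof.
  intros Hc [t0 [Ht0 HX0]].
  set (Z := fun s => 0 <= s <= 1 /\ X s = pzero).
  assert (Hb : bound Z) by (exists 1; intros s [Hs _]; lra).
  destruct (completeness Z Hb (ex_intro _ t0 (conj Ht0 HX0))) as [sg [Hub Hlub]].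
  assert (Hs0 : t0 <= sg) by (apply Hub; split; auto).
  assert (Hs1 : sg <= 1) by (apply Hlub; intros s [Hs _]; lra).
  exists sg. split. lra. split.
  - apply NNPP. intros Hn. assert (Hm : 0 < pnorm (X sg)).
    { destruct (Rle_lt_or_eq_dec 0 _ (pnorm_nonneg (X sg))); auto. exfalso. apply Hn. apply pnorm_eq0. auto. }
    destruct (Hc sg ltac:(lra) _ Hm) as [d [Hd Hdd]].
    assert (exists s, Z s /\ sg - d < s).
    { apply NNPP. intros Hn2. assert (sg <= sg - d). apply Hlub. intros s Hs. destruct (Rle_lt_dec s (sg - d)); auto.
      exfalso; apply Hn2; eauto. lra. }
    destruct H as [s [[Hs HXs] Hsd]]. assert (s <= sg) by (apply Hub; split; auto).
    specialize (Hdd s Hs ltac:(apply Rabs_lt_iff; lra)). rewrite HXs in Hdd.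
    rewrite psub_sym_norm, psub_zero_r in Hdd. lra.
  - intros t Ht HXt. assert (t <= sg) by (apply Hub; split; auto; lra). lra.
Qed.

Lemma cont01_rev X : cont01 X -> cont01 (fun t => X (1 - t)).
Proof. intros H t Ht eps Heps. destruct (H (1 - t) ltac:(lra) eps Heps) as [d [Hd Hdd]]. exists d. split; auto.
  intros s Hs Hst. apply Hdd. lra. replace (1 - s - (1 - t)) with (- (s - t)) by ring. rewrite Rabs_Ropp. auto. Qed.

Lemma first_zero (X : R -> pt) : cont01 X -> (exists t, 0 <= t <= 1 /\ X t = pzero) ->
  exists s, 0 <= s <= 1 /\ X s = pzero /\ forall t, 0 <= t < s -> X t <> pzero.
Proof.
  intros Hc [t0 [Ht0 HX0]]. destruct (last_zero (fun t => X (1 - t)) (cont01_rev X Hc)) as [s [Hs [HXs Hafter]]].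
  exists (1 - t0). split. lra. replace (1 - (1 - t0)) with t0 by ring. auto.
  exists (1 - s). split. lra. split. auto. intros t Ht. specialize (Hafter (1 - t) ltac:(lra)).
  replace (1 - (1 - t)) with t in Hafter by ring. auto.
Qed.

Definition pieces_ok (g : R -> R) (X : R -> pt) (t1 t2 A B : R) : Prop :=
  forall u v, 0 <= u -> u <= v -> v <= 1 -> (v <= t1 \/ (t1 <= u /\ v <= t2) \/ t2 <= u) ->
    Rabs (g v - g u) <= A * (v - u) + B * pnorm (psub (X v) (X u)).

Lemma ACg_pieces g X t1 t2 A B : t1 <= t2 -> abs_cont01 X -> 0 <= A -> 0 <= B -> pieces_ok g X t1 t2 A B -> ACg g.
Proof.
  intros Ht HX HA HB Hp eps Heps.
  destruct (HX (eps / (6 * (B + 1))) ltac:(apply Rdiv_lt_0_compat; lra)) as [dX [HdX HXf]].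
  exists (Rmin dX (eps / (2 * (A + 1)))). split. apply Rmin_case; auto. apply Rdiv_lt_0_compat; lra.
  intros n a b Hab Hord Hlen.
  assert (Hlen1 : rsum (fun k => b k - a k) n < dX) by (eapply Rlt_le_trans; [apply Hlen| apply Rmin_l]).
  assert (Hlen2 : rsum (fun k => b k - a k) n < eps / (2 * (A + 1))) by (eapply Rlt_le_trans; [apply Hlen| apply Rmin_r]).
  set (c1 := fun k => Rmax (a k) (Rmin (b k) t1)).
  set (c2 := fun k => Rmax (c1 k) (Rmin (b k) t2)).
  assert (Hc : forall k, a k <= c1 k /\ c1 k <= c2 k /\ c2 k <= b k -> True) by auto.
  assert (Hc1 : forall k, (k < n)%nat -> a k <= c1 k <= b k).
  { intros k Hk. destruct (Hab k Hk) as [? [? ?]]. unfold c1, Rmax, Rmin. repeat destruct Rle_dec; lra. }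
  assert (Hc2 : forall k, (k < n)%nat -> c1 k <= c2 k <= b k).
  { intros k Hk. destruct (Hab k Hk) as [? [? ?]]. pose proof (Hc1 k Hk). unfold c2 at 1 2. unfold Rmax at 1 2, Rmin. repeat destruct Rle_dec; lra. }
  assert (Hpc : forall u v, 0 <= u -> u <= v -> v <= 1 -> (u = v \/ v <= t1 \/ (t1 <= u /\ v <= t2) \/ t2 <= u) ->
    Rabs (g v - g u) <= A * (v - u) + B * pnorm (psub (X v) (X u))).
  { intros u v Hu Huv Hv [Heq|Hor]. subst. replace (g v - g v) with 0 by ring. rewrite Rabs_R0.
    pose proof (pnorm_nonneg (psub (X v) (X v))). nra. apply Hp; auto. }
  assert (Hterm : forall k, (k < n)%nat -> g (b k) - g (a k) <=
     A * (b k - a k) + B * (pnorm (psub (X (c1 k)) (X (a k))) + pnorm (psub (X (c2 k)) (X (c1 k))) + pnorm (psub (X (b k)) (X (c2 k))))).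
  { intros k Hk. destruct (Hab k Hk) as [Ha [Hab' Hb]]. pose proof (Hc1 k Hk). pose proof (Hc2 k Hk).
    assert (H1 : Rabs (g (c1 k) - g (a k)) <= A * (c1 k - a k) + B * pnorm (psub (X (c1 k)) (X (a k)))).
    { apply Hpc; try lra. unfold c1, Rmax, Rmin. repeat destruct Rle_dec; lra. }
    assert (H2 : Rabs (g (c2 k) - g (c1 k)) <= A * (c2 k - c1 k) + B * pnorm (psub (X (c2 k)) (X (c1 k)))).
    { apply Hpc; try lra. unfold c2, c1, Rmax, Rmin. repeat destruct Rle_dec; lra. }
    assert (H3 : Rabs (g (b k) - g (c2 k)) <= A * (b k - c2 k) + B * pnorm (psub (X (b k)) (X (c2 k)))).
    { apply Hpc; try lra. unfold c2, c1, Rmax, Rmin. repeat destruct Rle_dec; lra. }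
    apply Rabs_le_iff in H1. apply Rabs_le_iff in H2. apply Rabs_le_iff in H3. lra. }
  assert (F1 : rsum (fun k => pnorm (psub (X (c1 k)) (X (a k)))) n < eps / (6 * (B + 1))).
  { apply HXf. intros k Hk. pose proof (Hc1 k Hk). destruct (Hab k Hk). lra.
    intros k Hk. pose proof (Hc1 k ltac:(lia)). pose proof (Hord k Hk). lra.
    eapply Rle_lt_trans; [|apply Hlen1]. apply rsum_le. intros k Hk. pose proof (Hc1 k Hk). lra. }
  assert (F2 : rsum (fun k => pnorm (psub (X (c2 k)) (X (c1 k)))) n < eps / (6 * (B + 1))).
  { apply HXf. intros k Hk. pose proof (Hc1 k Hk). pose proof (Hc2 k Hk). destruct (Hab k Hk). lra.
    intros k Hk. pose proof (Hc1 (S k) Hk). pose proof (Hc2 k ltac:(lia)). pose proof (Hord k Hk). lra.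
    eapply Rle_lt_trans; [|apply Hlen1]. apply rsum_le. intros k Hk. pose proof (Hc1 k Hk). pose proof (Hc2 k Hk). lra. }
  assert (F3 : rsum (fun k => pnorm (psub (X (b k)) (X (c2 k)))) n < eps / (6 * (B + 1))).
  { apply HXf. intros k Hk. pose proof (Hc1 k Hk). pose proof (Hc2 k Hk). destruct (Hab k Hk). lra.
    intros k Hk. pose proof (Hc1 (S k) Hk). pose proof (Hc2 (S k) Hk). pose proof (Hord k Hk). lra.
    eapply Rle_lt_trans; [|apply Hlen1]. apply rsum_le. intros k Hk. pose proof (Hc1 k Hk). pose proof (Hc2 k Hk). lra. }
  eapply Rle_lt_trans. apply rsum_le. exact Hterm.
  rewrite rsum_plus, rsum_scal, rsum_scal, !rsum_plus.
  assert (A * rsum (fun k => b k - a k) n <= A * (eps / (2 * (A + 1)))) by (apply Rmult_le_compat_l; lra).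
  assert (A * (eps / (2 * (A + 1))) < eps / 2). { apply Rlt_le_trans with ((A+1) * (eps / (2 * (A + 1)))). 
    apply Rmult_lt_compat_r. apply Rdiv_lt_0_compat; lra. lra. right; field; lra. }
  assert (B * (rsum (fun k => pnorm (psub (X (c1 k)) (X (a k)))) n + rsum (fun k => pnorm (psub (X (c2 k)) (X (c1 k)))) n + rsum (fun k => pnorm (psub (X (b k)) (X (c2 k)))) n) <= B * (3 * (eps / (6 * (B + 1))))) by (apply Rmult_le_compat_l; lra).
  assert (B * (3 * (eps / (6 * (B + 1)))) < eps / 2). { apply Rlt_le_trans with ((B+1) * (3 * (eps / (6 * (B + 1))))). 
    apply Rmult_lt_compat_r. apply Rmult_lt_0_compat. lra. apply Rdiv_lt_0_compat; lra. lra. right; field; lra. }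
  lra.
Qed.


Section Vals.
Variable N : nat.
Variable e : nat -> pt.
Variable L : nat -> R -> R.
Hypothesis HN : (1 <= N)%nat.
Hypothesis He1 : forall i, (i < N)%nat -> pnorm (e i) = 1.
Hypothesis Hinj : forall i j, (i < N)%nat -> (j < N)%nat -> e i = e j -> i = j.
Let Hsez := scal_e_zero N e He1.
Let Hcs := coord_scal N e He1.
Let Huniq := inJstar_unique N e HN He1 Hinj.
Let Hnz := inJstar_nz N e He1.

Lemma inJ_cases z : inJ N e z -> z = pzero \/ exists i a, (i < N)%nat /\ 0 < a /\ z = scal a (e i).
Proof. intros [i [Hi [a [Ha ->]]]]. destruct (Req_dec a 0). subst. left. apply scal_zero.
  right. exists i, a. repeat split; auto. lra. Qed.

Lemma inJi_star i a k : (i < N)%nat -> (k < N)%nat -> 0 < a -> inJi e k (scal a (e i)) -> k = i.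
Proof. intros Hi Hk Ha [b [Hb Heq]]. destruct (Req_dec b 0). subst. rewrite scal_zero in Heq.
  apply Hsez in Heq; auto. lra.
  apply (Huniq k i (scal a (e i))); auto. exists b. split; auto; lra. exists a; split; auto. Qed.

Lemma E1_star j a tau : (j < N)%nat -> 0 < a -> tau <> 0 ->
  Defs.E1 N e L tau (scal a (e j)) = Fin (tau * L j (- a / tau) - tau * L0 N L 0).
Proof. intros Hj Ha Ht. unfold Defs.E1. apply the_Rbar_eq.
  - left. exists j. repeat split; auto. exists a; split; auto. rewrite Hcs; auto.
  - intros w [[j' [Hj' [Hs [_ ->]]]]|[[Hz _]|[Hz _]]].
    + assert (j' = j) by (apply (Huniq j' j (scal a (e j))); auto; exists a; split; auto).
      subst j'. rewrite Hcs; auto.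
    + apply Hsez in Hz; auto. lra.
    + lra.
Qed.
Lemma E1_zero tau : Defs.E1 N e L tau pzero = Fin 0.
Proof. unfold Defs.E1. apply the_Rbar_eq. right; left; auto.
  intros w [[j' [Hj' [Hs _]]]|[[_ ->]|[_ [Hz _]]]]; auto. exfalso; apply (Hnz j'); auto. tauto. Qed.
Lemma E1_inf y : y <> pzero -> Defs.E1 N e L 0 y = PInf.
Proof. intros Hy. unfold Defs.E1. apply the_Rbar_eq. right; right; auto.
  intros w [[j' [_ [_ [H _]]]]|[[Hz _]|[_ [_ ->]]]]; auto; tauto. Qed.

Lemma E2_star i a tau : (i < N)%nat -> 0 < a -> tau <> 1 ->
  Defs.E2 N e L tau (scal a (e i)) = Fin ((1 - tau) * L i (a / (1 - tau)) + tau * L0 N L 0).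
Proof. intros Hi Ha Ht. unfold Defs.E2. apply the_Rbar_eq.
  - left. exists i. repeat split; auto. exists a; split; auto. rewrite Hcs; auto.
  - intros w [[j' [Hj' [Hs [_ ->]]]]|[[Hz _]|[Hz _]]].
    + assert (j' = i) by (apply (Huniq j' i (scal a (e i))); auto; exists a; split; auto).
      subst j'. rewrite Hcs; auto.
    + apply Hsez in Hz; auto. lra.
    + lra.
Qed.
Lemma E2_zero tau : Defs.E2 N e L tau pzero = Fin (L0 N L 0).
Proof. unfold Defs.E2. apply the_Rbar_eq. right; left; auto.
  intros w [[j' [Hj' [Hs _]]]|[[_ ->]|[_ [Hz _]]]]; auto. exfalso; apply (Hnz j'); auto. tauto. Qed.
Lemma E2_inf x : x <> pzero -> Defs.E2 N e L 1 x = PInf.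
Proof. intros Hx. unfold Defs.E2. apply the_Rbar_eq. right; right; auto.
  intros w [[j' [_ [_ [H _]]]]|[[Hz _]|[_ [_ ->]]]]; auto; tauto. Qed.

Lemma Dstraight_same i a b : (i < N)%nat -> 0 <= a -> 0 <= b -> ~ (a = 0 /\ b = 0) ->
  Dstraight N e L (scal a (e i)) (scal b (e i)) = Fin (L i (b - a)).
Proof. intros Hi Ha Hb Hab. unfold Dstraight. apply the_Rbar_eq.
  - left. exists i. split; auto. split. exists a; split; auto. split. exists b; split; auto. split.
    intros [H1 H2]. apply Hab. split; eapply Hsez; eauto.
    rewrite !Hcs; auto.
  - assert (Hnab : 0 < a \/ 0 < b) by lra.
    intros w [[i' [Hi' [Hy [Hx [_ ->]]]]]|[[H1 [H2 _]]|[Hn _]]].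
    + assert (i' = i). { destruct Hnab. apply (inJi_star i a i'); auto. apply (inJi_star i b i'); auto. }
      subst i'. rewrite !Hcs; auto.
    + exfalso; apply Hab. split; eapply Hsez; eauto.
    + exfalso. apply Hn. exists i. split; auto. split; [exists a| exists b]; split; auto.
Qed.
Lemma Dstraight_zero : Dstraight N e L pzero pzero = Fin (L0 N L 0).
Proof. unfold Dstraight. apply the_Rbar_eq. right; left; auto.
  intros w [[i' [Hi' [_ [_ [H _]]]]]|[[_ [_ ->]]|[Hn _]]]; auto. tauto.
  exfalso; apply Hn. exists O. split. lia. split; exists 0; split; try lra; rewrite scal_zero; auto. Qed.
Lemma Dstraight_diff i k a b : (i < N)%nat -> (k < N)%nat -> i <> k -> 0 < a -> 0 < b ->
  Dstraight N e L (scal a (e i)) (scal b (e k)) = PInf.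
Proof. intros Hi Hk Hik Ha Hb. unfold Dstraight. apply the_Rbar_eq.
  - right; right. split; auto. intros [m [Hm [Hy Hx]]]. apply Hik.
    apply (inJi_star i a m) in Hy; auto. apply (inJi_star k b m) in Hx; auto. lia.
  - intros w [[i' [Hi' [Hy [Hx _]]]]|[[H1 _]|[_ ->]]]; auto.
    + exfalso. apply Hik. apply (inJi_star i a i') in Hy; auto. apply (inJi_star k b i') in Hx; auto. lia.
    + exfalso. apply Hsez in H1; auto. lra.
Qed.
End Vals.

Section Vals2.
Variable N : nat.
Variable e : nat -> pt.
Variable L : nat -> R -> R.
Hypothesis HN : (1 <= N)%nat.
Hypothesis He1 : forall i, (i < N)%nat -> pnorm (e i) = 1.
Hypothesis Hinj : forall i j, (i < N)%nat -> (j < N)%nat -> e i = e j -> i = j.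

Lemma E1_val j a tau : (j < N)%nat -> 0 <= a -> (a = 0 -> tau = 0) -> (0 < a -> tau <> 0) ->
  Defs.E1 N e L tau (scal a (e j)) = Fin (tau * L j (- a / tau) - tau * L0 N L 0).
Proof. intros Hj Ha H0 H1. destruct (Req_dec a 0) as [Ha0|Ha0].
  - rewrite Ha0, scal_zero, (H0 Ha0). rewrite E1_zero by auto. f_equal. ring.
  - apply E1_star; auto. lra. apply H1. lra. Qed.
Lemma E2_val i b tau : (i < N)%nat -> 0 <= b -> (b = 0 -> tau = 1) -> (0 < b -> tau <> 1) ->
  Defs.E2 N e L tau (scal b (e i)) = Fin ((1 - tau) * L i (b / (1 - tau)) + tau * L0 N L 0).
Proof. intros Hi Hb H0 H1. destruct (Req_dec b 0) as [Hb0|Hb0].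
  - rewrite Hb0, scal_zero, (H0 Hb0). rewrite E2_zero by auto. f_equal. ring.
  - apply E2_star; auto. lra. apply H1. lra. Qed.
End Vals2.


Lemma pnorm_le_abs z : pnorm z <= Rabs (fst z) + Rabs (snd z).
Proof. apply pnorm_le_sq. pose proof (Rabs_pos (fst z)); pose proof (Rabs_pos (snd z)); lra.
  destruct z as [a b]; unfold dot; simpl. pose proof (Rabs_pos a); pose proof (Rabs_pos b).
  assert (Rabs a * Rabs a = a * a) by (rewrite <- Rabs_mult; apply Rabs_pos_eq; nra).
  assert (Rabs b * Rabs b = b * b) by (rewrite <- Rabs_mult; apply Rabs_pos_eq; nra).
  nra. Qed.

Lemma straddle_local (g h : R -> R) t d ft C r0 : derivable_pt_lim h t d -> d <= ft -> 0 < r0 ->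
  (forall s, 0 <= s <= 1 -> Rabs (s - t) < r0 -> g s = h s + C) ->
  forall eps, 0 < eps -> exists r, 0 < r /\ forall u v, 0 <= u -> u <= t -> t <= v -> v <= 1 -> t - r < u -> v < t + r ->
    g v - g u <= (ft + eps) * (v - u).
Proof. intros Hd Hdf Hr0 Hg eps Heps. destruct (straddle_deriv h t d Hd eps Heps) as [r1 [Hr1 Hs]].
  exists (Rmin r0 r1). split. apply Rmin_case; lra. intros u v Hu Hut Htv Hv Hu' Hv'.
  pose proof (Rmin_l r0 r1). pose proof (Rmin_r r0 r1).
  rewrite (Hg u), (Hg v); try (split; lra); try (apply Rabs_lt_iff; lra).
  specialize (Hs u v Hut Htv ltac:(lra) ltac:(lra)). nra. Qed.

Lemma coord_diff e k u v : coord e k u - coord e k v = dot (psub u v) (e k).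
Proof. unfold coord, dot, psub; simpl; ring. Qed.

Lemma deriv_coord (X : R -> pt) t V e k a b : has_deriv X t V ->
  derivable_pt_lim (fun s => a * s + b * coord e k (X s)) t (a + b * coord e k V).
Proof. intros [H1 H2]. 
  assert (Hf : (fun s => a * s + b * coord e k (X s)) = (fun s => a * s + (b * fst (e k)) * fst (X s) + (b * snd (e k)) * snd (X s))).
  { apply functional_extensionality. intros s. unfold coord, dot. ring. }
  rewrite Hf. replace (a + b * coord e k V) with (a + (b * fst (e k)) * fst V + (b * snd (e k)) * snd V) by (unfold coord, dot; ring).
  apply dlin; auto. Qed.

Section Lower.
Variable N : nat.
Variable e : nat -> pt.
Variable L : nat -> R -> R.
Variable gamma : R.
Hypothesis HN : (1 <= N)%nat.
Hypothesis He1 : forall i, (i < N)%nat -> pnorm (e i) = 1.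
Hypothesis Hinj : forall i j, (i < N)%nat -> (j < N)%nat -> e i = e j -> i = j.
Hypothesis Hg : 0 < gamma.
Hypothesis HL : forall i, (i < N)%nat -> C2_convex gamma (L i).
Let Hsez := scal_e_zero N e He1.
Let Hcs := coord_scal N e He1.
Let Huniq := inJstar_unique N e HN He1 Hinj.
Let Hnz := inJstar_nz N e He1.
Let Hlb := local_branch N e HN He1 Hinj.
Let Hpb := phi_branch N e HN He1 Hinj.
Let Hsep := sepc_spec N e HN He1 Hinj.
Let HzJ := zero_inJ N e HN.

Lemma Ltan i p q : (i < N)%nat -> L i q + Ld (L i) q * (p - q) <= L i p.
Proof. intros. apply (Ld_spec gamma); auto. Qed.

Definition goodpt (X V : R -> pt) (f : R -> R) (t : R) : Prop :=
  (has_deriv X t (V t) /\ Aset N e (X t) (V t)) /\ Lrel N e L (X t) (V t) (f t).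

Lemma good_star X V f t k : goodpt X V f t -> (k < N)%nat -> inJstar e k (X t) ->
  exists p, V t = scal p (e k) /\ f t = L k p.
Proof. intros [[_ HA] HL'] Hk Hs. destruct HL' as [[i [Hi [Hsi [p [HV Hf]]]]]|[Hz _]].
  - assert (i = k) by (apply (Huniq i k (X t)); auto). subst. eauto.
  - exfalso. apply (Hnz k Hk). rewrite <- Hz. auto. Qed.

Lemma good_zero X V f t : goodpt X V f t -> X t = pzero -> V t = pzero -> f t = L0 N L 0.
Proof. intros [[_ HA] HL'] Hz Hv. destruct HL' as [[i [Hi [Hsi _]]]|[_ [i [Hi [p [Hp [HV Hf]]]]]]].
  - exfalso. apply (Hnz i Hi). rewrite <- Hz. auto.
  - rewrite Hv in HV. symmetry in HV. apply Hsez in HV; auto. subst. auto. Qed.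

Lemma iso_negl (X V : R -> pt) : negligible (fun t => X t = pzero /\ has_deriv X t (V t) /\ V t <> pzero).
Proof. apply negl_isolated. intros t [Hz [[H1 H2] Hv]].
  set (m := pnorm (V t)).
  assert (Hm : 0 < m). { destruct (Rle_lt_or_eq_dec 0 _ (pnorm_nonneg (V t))); auto. exfalso; apply Hv; apply pnorm_eq0; auto. }
  destruct (deriv_bound _ _ _ H1 (m/4) ltac:(lra)) as [r1 [Hr1 Hb1]].
  destruct (deriv_bound _ _ _ H2 (m/4) ltac:(lra)) as [r2 [Hr2 Hb2]].
  exists (Rmin r1 r2). split. apply Rmin_case; lra.
  intros s [Hzs _] Hst. apply NNPP. intros Hne.
  assert (Hk : s - t <> 0) by lra. set (k := s - t) in *.
  pose proof (Rmin_l r1 r2). pose proof (Rmin_r r1 r2).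
  specialize (Hb1 k ltac:(lra)). specialize (Hb2 k ltac:(lra)).
  replace (t + k) with s in Hb1, Hb2 by (unfold k; ring). rewrite Hzs, Hz in Hb1, Hb2. simpl in Hb1, Hb2.
  assert (pnorm (scal k (V t)) <= m / 2 * Rabs k).
  { eapply Rle_trans. apply pnorm_le_abs. simpl.
    replace (0 - 0 - fst (V t) * k) with (- (k * fst (V t))) in Hb1 by ring.
    replace (0 - 0 - snd (V t) * k) with (- (k * snd (V t))) in Hb2 by ring.
    rewrite Rabs_Ropp in Hb1, Hb2. lra. }
  rewrite pnorm_scal in H3. fold m in H3. assert (0 < Rabs k) by (apply Rabs_pos_lt; auto). nra.
Qed.

Lemma branch_const (X : R -> pt) k a b : (forall t, 0 <= t <= 1 -> inJ N e (X t)) -> cont01 X ->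
  0 <= a -> a <= b -> b <= 1 -> (forall t, a <= t <= b -> X t <> pzero) -> (k < N)%nat ->
  inJstar e k (X a) -> forall t, a <= t <= b -> inJstar e k (X t).
Proof.
  intros HJ Hc Ha Hab Hb Hnz0 Hk Hka.
  assert (Hloc : forall m t, (m < N)%nat -> 0 <= t <= 1 -> inJstar e m (X t) -> exists r, 0 < r /\ forall s, 0 <= s <= 1 -> Rabs (s - t) < r -> inJstar e m (X s)).
  { intros m t Hm Ht [a' [Ha' HXt]]. pose proof Hsep as [[Hs0 _] _].
    destruct (Hc t Ht (sepc N e * a') ltac:(nra)) as [d [Hd Hdd]]. exists d. split; auto.
    intros s Hs Hst. apply (Hlb m a'); auto. rewrite <- HXt. apply Hdd; auto. }
  apply (interval_connected a b (fun t => inJstar e k (X t))); auto.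
  - intros t Ht Hkt. destruct (Hloc k t Hk ltac:(lra) Hkt) as [r [Hr Hrr]]. exists r. split; auto.
    intros s Hs Hst. apply Hrr; auto. lra.
  - intros t Ht Happ. destruct (inJ_cases N e (X t) (HJ t ltac:(lra))) as [Hz|[m [a' [Hm [Ha' HXt]]]]].
    + exfalso. apply (Hnz0 t Ht Hz).
    + assert (Hmt : inJstar e m (X t)) by (exists a'; split; auto).
      destruct (Hloc m t Hm ltac:(lra) Hmt) as [r [Hr Hrr]].
      destruct (Happ r Hr) as [s [Hs [Hst Hks]]].
      assert (inJstar e m (X s)) by (apply Hrr; auto; lra).
      assert (k = m) by (apply (Huniq k m (X s)); auto). subst. auto.
Qed.


Lemma pieces_lin (X : R -> pt) A0 s0 k : (k < N)%nat -> forall u v, u <= v ->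
  Rabs ((A0 * v + s0 * coord e k (X v)) - (A0 * u + s0 * coord e k (X u))) <= Rabs A0 * (v - u) + Rabs s0 * pnorm (psub (X v) (X u)).
Proof. intros Hk u v Huv. replace ((A0 * v + s0 * coord e k (X v)) - (A0 * u + s0 * coord e k (X u))) with
  (A0 * (v - u) + s0 * (coord e k (X v) - coord e k (X u))) by ring.
  eapply Rle_trans. apply Rabs_triang. rewrite !Rabs_mult. rewrite (Rabs_pos_eq (v - u)) by lra.
  rewrite coord_diff. pose proof (coord_lin_bound (X v) (X u) (e k) (He1 k Hk)). pose proof (Rabs_pos s0).
  apply Rplus_le_compat_l. apply Rmult_le_compat_l; auto. Qed.

Definition Ebad (X V : R -> pt) (f : R -> R) (t : R) : Prop :=
  (0 <= t <= 1 /\ ~ goodpt X V f t) \/ t = 0 \/ t = 1.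

Lemma Ebad_negl X V f : ae01 (goodpt X V f) -> negligible (Ebad X V f).
Proof. intros H. unfold Ebad. eapply negl_subset. apply negl_union. apply negl_union. exact H. apply (negl_point 0). apply (negl_point 1).
  simpl. intros t [H1|[H2|H3]]; [left; left| left; right| right]; auto. Qed.

Lemma lower_caseA (X V : R -> pt) f c y x : (forall t, 0 <= t <= 1 -> inJ N e (X t)) -> abs_cont01 X ->
  X 0 = y -> X 1 = x -> ae01 (goodpt X V f) -> mcshane01 f c -> (forall t, 0 <= t <= 1 -> X t <> pzero) ->
  Rbar_le (Dstraight N e L y x) (Fin c).
Proof.
  intros HJ HAC HX0 HX1 Hae Hmc Hnz0. pose proof (ac_cont X HAC) as Hc.
  destruct (inJ_cases N e (X 0) (HJ 0 ltac:(lra))) as [Hz|[i [a [Hi [Ha Hy]]]]].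
  { exfalso. apply (Hnz0 0); auto. lra. }
  assert (Hbr : forall t, 0 <= t <= 1 -> inJstar e i (X t)).
  { apply (branch_const X i 0 1); auto; try lra. exists a; split; auto. }
  destruct (Hbr 1 ltac:(lra)) as [b [Hb Hx]].
  rewrite <- HX0, <- HX1, Hy, Hx. rewrite Dstraight_same by (auto; lra). simpl.
  set (q := b - a). set (s := Ld (L i) q). set (A0 := L i q - s * q).
  set (g := fun t => A0 * t + s * coord e i (X t)).
  assert (Hg1 : g 1 - g 0 = L i q).
  { unfold g. rewrite Hx, Hy, !Hcs by auto. unfold A0, q. ring. }
  rewrite <- Hg1. apply (ftc_ineq f g c (Ebad X V f)); auto.
  - apply Ebad_negl; auto.
  - apply (ACg_pieces g X 1 1 (Rabs A0) (Rabs s)); auto; try lra; try apply Rabs_pos.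
    intros u v Hu Huv Hv _. apply pieces_lin; auto.
  - intros t Ht HnE. assert (Hgt : goodpt X V f t) by (apply NNPP; intros Hn; apply HnE; left; auto).
    destruct (good_star X V f t i Hgt Hi (Hbr t Ht)) as [p [HV Hf]].
    intros eps Heps. apply (straddle_local g g t (A0 + s * coord e i (V t)) (f t) 0 1); auto; try lra.
    + apply deriv_coord. apply Hgt.
    + rewrite HV, Hcs, Hf by auto. pose proof (Ltan i p q Hi). fold s in H. unfold A0. lra.
    + intros; ring.
Qed.


Lemma lower_caseB (X V : R -> pt) f c y x t1 t2 j a i b :
  (forall t, 0 <= t <= 1 -> inJ N e (X t)) -> abs_cont01 X ->
  X 0 = y -> X 1 = x -> ae01 (goodpt X V f) -> mcshane01 f c ->
  0 <= t1 -> t1 <= t2 -> t2 <= 1 -> X t1 = pzero -> X t2 = pzero ->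
  (forall t, 0 <= t < t1 -> X t <> pzero) -> (forall t, t2 < t <= 1 -> X t <> pzero) ->
  (j < N)%nat -> 0 <= a -> y = scal a (e j) -> (i < N)%nat -> 0 <= b -> x = scal b (e i) ->
  t1 * L j (- a / t1) + L0 N L 0 * (t2 - t1) + (1 - t2) * L i (b / (1 - t2)) <= c.
Proof.
  intros HJ HAC HX0 HX1 Hae Hmc Ht1 Ht12 Ht2 HXt1 HXt2 Hbef Haft Hj Ha Hy Hi Hb Hx.
  pose proof (ac_cont X HAC) as Hc.
  assert (Ha0 : t1 = 0 -> a = 0).
  { intros H0. rewrite H0 in HXt1. rewrite HX0, Hy in HXt1. apply Hsez in HXt1; auto. }
  assert (Hb0 : t2 = 1 -> b = 0).
  { intros H0. rewrite H0 in HXt2. rewrite HX1, Hx in HXt2. apply Hsez in HXt2; auto. }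
  set (q1 := - a / t1). set (q3 := b / (1 - t2)).
  assert (Hq1 : q1 * t1 = - a).
  { unfold q1. destruct (Req_dec t1 0) as [H0|H0]. rewrite (Ha0 H0), H0. unfold Rdiv. ring. field. auto. }
  assert (Hq3 : q3 * (1 - t2) = b).
  { unfold q3. destruct (Req_dec t2 1) as [H0|H0]. rewrite (Hb0 H0), H0. unfold Rdiv. ring. field. lra. }
  set (s1 := Ld (L j) q1). set (A1 := L j q1 - s1 * q1).
  set (G1 := fun t => A1 * t + s1 * coord e j (X t)).
  set (s0 := fun k => Ld (L k) 0). set (l0 := L0 N L 0).
  set (G2 := fun t => G1 t1 + l0 * (t - t1) + phi N e s0 (X t)).
  set (s3 := Ld (L i) q3). set (A3 := L i q3 - s3 * q3).
  set (G3 := fun t => G2 t2 + A3 * (t - t2) + s3 * coord e i (X t)).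
  set (g := fun t => if Rle_dec t t1 then G1 t else if Rle_dec t t2 then G2 t else G3 t).
  assert (HG21 : G2 t1 = G1 t1). { unfold G2. rewrite HXt1, phi_zero. ring. }
  assert (HG32 : G3 t2 = G2 t2). { unfold G3. rewrite HXt2, coord_zero. ring. }
  assert (HG22 : G2 t2 = G1 t1 + l0 * (t2 - t1)). { unfold G2. rewrite HXt2, phi_zero. ring. }
  assert (gA1 : forall t, t <= t1 -> g t = G1 t).
  { intros t Ht. unfold g. destruct Rle_dec; [auto| lra]. }
  assert (gA2 : forall t, t1 <= t <= t2 -> g t = G2 t).
  { intros t Ht. unfold g. destruct Rle_dec. replace t with t1 by lra. auto. destruct Rle_dec; [auto| lra]. }
  assert (gA3 : forall t, t2 <= t -> g t = G3 t).
  { intros t Ht. unfold g. destruct Rle_dec. replace t with t2 by lra. rewrite HG32, HG22. replace t2 with t1 by lra. ring.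
    destruct Rle_dec; auto. replace t with t2 by lra. auto. }
  assert (Hval : g 1 - g 0 = t1 * L j q1 + l0 * (t2 - t1) + (1 - t2) * L i q3).
  { rewrite gA3, gA1 by lra. unfold G3 at 1. rewrite HG22. unfold G1. rewrite HXt1, HX1, HX0, Hx, Hy, coord_zero, !Hcs by auto.
    unfold A1, A3. replace (s1 * q1 * t1) with (s1 * (q1 * t1)) by ring. 
    replace (L j q1 * t1 - s1 * (q1 * t1) + s1 * 0 + l0 * (t2 - t1) + (L i q3 - s3 * q3) * (1 - t2) + s3 * b - ((L j q1 - s1 * q1) * 0 + s1 * a))
      with (L j q1 * t1 - s1 * (q1 * t1) - s1 * a + l0 * (t2 - t1) + L i q3 * (1 - t2) - s3 * (q3 * (1 - t2)) + s3 * b) by ring.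
    replace ((L j q1 - s1 * q1) * t1) with (L j q1 * t1 - s1 * (q1 * t1)) by ring. rewrite Hq1.
    replace ((L i q3 - s3 * q3) * (1 - t2)) with (L i q3 * (1 - t2) - s3 * (q3 * (1 - t2))) by ring. rewrite Hq3. ring. }
  fold q1 q3 l0. rewrite <- Hval.
  set (E := fun t => Ebad X V f t \/ t = t1 \/ t = t2 \/ (X t = pzero /\ has_deriv X t (V t) /\ V t <> pzero)).
  destruct (phi_lip N e HN He1 Hinj s0) as [Bp [HBp HBpl]].
  apply (ftc_ineq f g c E); auto.
  - unfold E. apply (negl_subset (fun t => ((Ebad X V f t \/ t = t1) \/ t = t2) \/ (X t = pzero /\ has_deriv X t (V t) /\ V t <> pzero))).
    apply (negl_union (fun t => (Ebad X V f t \/ t = t1) \/ t = t2)). apply (negl_union (fun t => Ebad X V f t \/ t = t1)).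
    apply (negl_union (Ebad X V f)).
    apply Ebad_negl; auto. apply (negl_point t1). apply (negl_point t2). apply (iso_negl X V).
    intros t [H1|[H2|[H3|H4]]]; [left; left; left| left; left; right| left; right| right]; auto.
  - apply (ACg_pieces g X t1 t2 (Rabs A1 + Rabs l0 + Rabs A3) (Rabs s1 + Bp + Rabs s3)); auto.
    pose proof (Rabs_pos A1); pose proof (Rabs_pos l0); pose proof (Rabs_pos A3); lra.
    pose proof (Rabs_pos s1); pose proof (Rabs_pos s3); lra.
    intros u v Hu Huv Hv Hcase. pose proof (pnorm_nonneg (psub (X v) (X u))).
    pose proof (Rabs_pos A1); pose proof (Rabs_pos l0); pose proof (Rabs_pos A3);
    pose proof (Rabs_pos s1); pose proof (Rabs_pos s3).
    destruct Hcase as [Hc1|[Hc2|Hc3]].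
    + rewrite !gA1 by lra. eapply Rle_trans. apply (pieces_lin X A1 s1 j Hj u v Huv). nra.
    + rewrite !gA2 by lra. unfold G2. 
      replace (G1 t1 + l0 * (v - t1) + phi N e s0 (X v) - (G1 t1 + l0 * (u - t1) + phi N e s0 (X u))) with
        (l0 * (v - u) + (phi N e s0 (X v) - phi N e s0 (X u))) by ring.
      eapply Rle_trans. apply Rabs_triang. rewrite Rabs_mult, (Rabs_pos_eq (v - u)) by lra.
      pose proof (HBpl (X v) (X u) (HJ v ltac:(lra)) (HJ u ltac:(lra))). nra.
    + rewrite !gA3 by lra. unfold G3.
      replace (G2 t2 + A3 * (v - t2) + s3 * coord e i (X v) - (G2 t2 + A3 * (u - t2) + s3 * coord e i (X u))) with
        ((A3 * v + s3 * coord e i (X v)) - (A3 * u + s3 * coord e i (X u))) by ring.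
      eapply Rle_trans. apply (pieces_lin X A3 s3 i Hi u v Huv). nra.
  - intros t Ht HnE.
    assert (Hgt : goodpt X V f t) by (apply NNPP; intros Hn; apply HnE; left; left; auto).
    assert (Ht0 : t <> 0) by (intros H; apply HnE; left; right; left; auto).
    assert (Ht1' : t <> 1) by (intros H; apply HnE; left; right; right; auto).
    assert (Htt1 : t <> t1) by (intros H; apply HnE; right; left; auto).
    assert (Htt2 : t <> t2) by (intros H; apply HnE; right; right; left; auto).
    intros eps Heps.
    destruct (Rlt_le_dec t t1) as [Hlt1|Hge1].
    +
      assert (HX0nz : X 0 <> pzero) by (apply Hbef; lra).
      assert (Hapos : 0 < a). { destruct (Req_dec a 0) as [H0|H0]. exfalso. apply HX0nz. rewrite HX0, Hy, H0. apply scal_zero. lra. }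
      assert (Hbr : inJstar e j (X t)).
      { apply (branch_const X j 0 t); auto; try lra. intros s Hs. apply Hbef. lra. rewrite HX0, Hy. exists a. split; auto. }
      destruct (good_star X V f t j Hgt Hj Hbr) as [p [HV Hf]].
      apply (straddle_local g G1 t (A1 + s1 * coord e j (V t)) (f t) 0 (t1 - t)); auto; try lra.
      * apply deriv_coord. apply Hgt.
      * rewrite HV, Hcs, Hf by auto. pose proof (Ltan j p q1 Hj). fold s1 in H. unfold A1. lra.
      * intros s Hs Hst. apply Rabs_lt_iff in Hst. rewrite gA1 by lra. ring.
    + destruct (Rlt_le_dec t t2) as [Hlt2|Hge2].
      *
        assert (Hmid : t1 < t < t2) by lra.
        destruct (inJ_cases N e (X t) (HJ t Ht)) as [Hz|[k [a' [Hk [Ha' HXt]]]]].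
        -- assert (HVz : V t = pzero).
           { apply NNPP. intros Hn. apply HnE. right; right; right. split; auto. split; auto. apply Hgt. }
           pose proof (good_zero X V f t Hgt Hz HVz) as Hf.
           destruct Hgt as [[[Hd1 Hd2] _] _].
           set (ep := eps / (2 * (Bp + 1))).
           assert (Hep : 0 < ep) by (unfold ep; apply Rdiv_lt_0_compat; lra).
           destruct (deriv_bound _ _ _ Hd1 ep Hep) as [r1 [Hr1 Hb1]].
           destruct (deriv_bound _ _ _ Hd2 ep Hep) as [r2 [Hr2 Hb2]].
           assert (Hsmall : forall s, Rabs (s - t) < Rmin r1 r2 -> pnorm (X s) <= 2 * ep * Rabs (s - t)).
           { intros s Hs. pose proof (Rmin_l r1 r2). pose proof (Rmin_r r1 r2).
             specialize (Hb1 (s - t) ltac:(lra)). specialize (Hb2 (s - t) ltac:(lra)).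
             replace (t + (s - t)) with s in Hb1, Hb2 by ring. rewrite Hz, HVz in Hb1, Hb2. simpl in Hb1, Hb2.
             replace (fst (X s) - 0 - 0 * (s - t)) with (fst (X s)) in Hb1 by ring.
             replace (snd (X s) - 0 - 0 * (s - t)) with (snd (X s)) in Hb2 by ring.
             pose proof (pnorm_le_abs (X s)). lra. }
           assert (Hphi : forall s, 0 <= s <= 1 -> Rabs (phi N e s0 (X s)) <= Bp * pnorm (X s)).
           { intros s Hs. pose proof (HBpl (X s) pzero (HJ s Hs) HzJ). rewrite phi_zero, psub_zero_r in H. 
             replace (phi N e s0 (X s) - 0) with (phi N e s0 (X s)) in H by ring. auto. }
           exists (Rmin (Rmin r1 r2) (Rmin (t - t1) (t2 - t))). split.
           { repeat apply Rmin_case; lra. }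
           intros u v Hu Hut Htv Hv Hu' Hv'.
           pose proof (Rmin_l (Rmin r1 r2) (Rmin (t - t1) (t2 - t))). pose proof (Rmin_r (Rmin r1 r2) (Rmin (t - t1) (t2 - t))).
           pose proof (Rmin_l (t - t1) (t2 - t)). pose proof (Rmin_r (t - t1) (t2 - t)).
           rewrite !gA2 by lra. unfold G2.
           pose proof (Hsmall u ltac:(apply Rabs_lt_iff; lra)). pose proof (Hsmall v ltac:(apply Rabs_lt_iff; lra)).
           rewrite (Rabs_left1 (u - t)) in H3 by lra. rewrite (Rabs_pos_eq (v - t)) in H4 by lra.
           pose proof (Hphi u ltac:(lra)). pose proof (Hphi v ltac:(lra)).
           apply Rabs_le_iff in H5. apply Rabs_le_iff in H6.
           assert (Bp * pnorm (X u) <= Bp * (2 * ep * - (u - t))) by (apply Rmult_le_compat_l; auto).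
           assert (Bp * pnorm (X v) <= Bp * (2 * ep * (v - t))) by (apply Rmult_le_compat_l; auto).
           assert (Bp * (2 * ep) <= eps). { apply Rle_trans with ((Bp + 1) * (2 * ep)). nra.
             unfold ep. right. field. lra. }
           rewrite Hf. fold l0. nra.
        -- assert (Hst : inJstar e k (X t)) by (exists a'; split; auto).
           destruct (good_star X V f t k Hgt Hk Hst) as [p [HV Hf]].
           pose proof Hsep as [[Hs0 _] _].
           destruct (Hc t Ht (sepc N e * a') ltac:(nra)) as [d [Hd Hdd]].
           apply (straddle_local g (fun s => l0 * s + s0 k * coord e k (X s)) t (l0 + s0 k * coord e k (V t)) (f t)
             (G1 t1 - l0 * t1) (Rmin d (Rmin (t - t1) (t2 - t)))); auto.
           ++ apply deriv_coord. apply Hgt.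
           ++ rewrite HV, Hcs, Hf by auto. pose proof (Ltan k p 0 Hk). pose proof (L0_le N L k 0 Hk).
              fold l0 in H0. unfold s0. lra.
           ++ repeat apply Rmin_case; lra.
           ++ intros s Hs Hst2. pose proof (Rmin_l d (Rmin (t - t1) (t2 - t))). pose proof (Rmin_r d (Rmin (t - t1) (t2 - t))).
              pose proof (Rmin_l (t - t1) (t2 - t)). pose proof (Rmin_r (t - t1) (t2 - t)).
              assert (Hks : inJstar e k (X s)).
              { apply (Hlb k a'); auto. rewrite <- HXt. apply Hdd; auto. lra. }
              destruct Hks as [b' [Hb' HXs]].
              apply Rabs_lt_iff in Hst2. rewrite gA2 by lra. unfold G2. rewrite HXs, Hpb, Hcs by (auto; lra). ring.
      *
        assert (Hgt2 : t2 < t) by lra.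
        assert (HX1nz : X 1 <> pzero) by (apply Haft; lra).
        destruct (inJ_cases N e (X t) (HJ t Ht)) as [Hz|[m [a' [Hm [Ha' HXt]]]]].
        { exfalso. apply (Haft t); auto; lra. }
        assert (Hbr1 : inJstar e m (X 1)).
        { apply (branch_const X m t 1); auto; try lra. intros s Hs. apply Haft. lra. exists a'. split; auto. }
        assert (Hbpos : 0 < b). { destruct (Req_dec b 0) as [H0|H0]. exfalso. apply HX1nz. rewrite HX1, Hx, H0. apply scal_zero. lra. }
        assert (m = i). { apply (Huniq m i (X 1)); auto. rewrite HX1, Hx. exists b. split; auto. }
        subst m.
        assert (Hst : inJstar e i (X t)) by (exists a'; split; auto).
        destruct (good_star X V f t i Hgt Hi Hst) as [p [HV Hf]].
        apply (straddle_local g (fun s => A3 * s + s3 * coord e i (X s)) t (A3 + s3 * coord e i (V t)) (f t)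
             (G2 t2 - A3 * t2) (t - t2)); auto; try lra.
        -- apply deriv_coord. apply Hgt.
        -- rewrite HV, Hcs, Hf by auto. pose proof (Ltan i p q3 Hi). fold s3 in H. unfold A3. lra.
        -- intros s Hs Hst2. apply Rabs_lt_iff in Hst2. rewrite gA3 by lra. unfold G3. ring.
Qed.

End Lower.


Section LowerFinal.
Variable N : nat.
Variable e : nat -> pt.
Variable L : nat -> R -> R.
Variable gamma : R.
Hypothesis HN : (1 <= N)%nat.
Hypothesis He1 : forall i, (i < N)%nat -> pnorm (e i) = 1.
Hypothesis Hinj : forall i j, (i < N)%nat -> (j < N)%nat -> e i = e j -> i = j.
Hypothesis Hg : 0 < gamma.
Hypothesis HL : forall i, (i < N)%nat -> C2_convex gamma (L i).
Let Hsez := scal_e_zero N e He1.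

Lemma lower X V y x c : inJ N e x -> inJ N e y -> admissible N e X V y x -> has_cost N e L X V c ->
  Rbar_le (Rbar_min (Dstraight N e L y x) (Djunction N e L y x)) (Fin c).
Proof.
  intros Hx Hy [HJ [HAC [HX0 [HX1 Hae1]]]] [f [Hae2 Hmc]].
  assert (Hae : ae01 (goodpt N e L X V f)) by (apply ae01_and; auto).
  pose proof (ac_cont X HAC) as Hc.
  destruct (classic (exists t, 0 <= t <= 1 /\ X t = pzero)) as [Hz|Hnz].
  - eapply Rbar_le_trans. apply Rbar_min_le_r.
    destruct (first_zero X Hc Hz) as [t1 [Ht1 [HXt1 Hbef]]].
    destruct (last_zero X Hc Hz) as [t2 [Ht2 [HXt2 Haft]]].
    assert (Ht12 : t1 <= t2). { destruct (Rle_lt_dec t1 t2); auto. exfalso. apply (Haft t1); auto. lra. }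
    destruct Hy as [j [Hj [a [Ha Hya]]]]. destruct Hx as [i [Hi [b [Hb Hxb]]]].
    pose proof (lower_caseB N e L gamma HN He1 Hinj Hg HL X V f c y x t1 t2 j a i b HJ HAC HX0 HX1 Hae Hmc
      ltac:(lra) Ht12 ltac:(lra) HXt1 HXt2 Hbef Haft Hj Ha Hya Hi Hb Hxb) as Hcb.
    destruct (Einf_glb (fun z => exists t1 t2, 0 <= t1 /\ t1 <= t2 /\ t2 <= 1 /\
                  z = Rbar_plus (Defs.E1 N e L t1 y) (Defs.E2 N e L t2 x))) as [Hlb _].
    eapply Rbar_le_trans. apply Hlb. exists t1, t2. split. lra. split. lra. split. lra. reflexivity.
    rewrite Hya, Hxb. rewrite E1_val, E2_val; auto.
    + simpl. lra.
    + intros Hb0. destruct (Req_dec t2 1); auto. exfalso. apply (Haft 1). lra. rewrite HX1, Hxb, Hb0. apply scal_zero.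
    + intros Hbp Ht. rewrite Ht in HXt2. rewrite HX1, Hxb in HXt2. apply Hsez in HXt2; auto. lra.
    + intros Ha0. destruct (Req_dec t1 0); auto. exfalso. apply (Hbef 0). lra. rewrite HX0, Hya, Ha0. apply scal_zero.
    + intros Hap Ht. rewrite Ht in HXt1. rewrite HX0, Hya in HXt1. apply Hsez in HXt1; auto. lra.
  - eapply Rbar_le_trans. apply Rbar_min_le_l.
    apply (lower_caseA N e L gamma HN He1 Hinj Hg HL X V f c y x); auto.
    intros t Ht Hzt. apply Hnz. eauto.
Qed.
End LowerFinal.


Lemma mcshane_pl (f G : R -> R) b1 b2 M : 0 <= M ->
  (forall u v, Rabs (G v - G u) <= M * Rabs (v - u)) ->
  (forall t, 0 <= t <= 1 -> t <> b1 -> t <> b2 -> exists r, 0 < r /\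
     forall u v, Rabs (u - t) < r -> Rabs (v - t) < r -> G v - G u = f t * (v - u)) ->
  Rabs (f b1) <= M -> Rabs (f b2) <= M -> mcshane01 f (G 1 - G 0).
Proof.
  intros HM HLip Hloc Hf1 Hf2 eps Heps.
  set (eta := eps / (8 * (M + 1))).
  assert (Heta : 0 < eta) by (unfold eta; apply Rdiv_lt_0_compat; lra).
  set (Pr := fun t r => 0 < r /\ forall u v, Rabs (u - t) < r -> Rabs (v - t) < r -> G v - G u = f t * (v - u)).
  set (rr := fun t => epsilon (inhabits 1) (Pr t)).
  assert (Hrr : forall t, 0 <= t <= 1 -> t <> b1 -> t <> b2 -> Pr t (rr t)).
  { intros t Ht H1 H2. unfold rr. apply epsilon_spec. apply Hloc; auto. }
  set (delta := fun t => if excluded_middle_informative (t = b1 \/ t = b2) then eta else rr t).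
  exists delta. split.
  { intros t Ht. unfold delta. destruct excluded_middle_informative as [H|H]; auto.
    apply (Hrr t Ht); intros Hc; apply H; auto. }
  intros n x tg Hx0 Hxn Hmono Htag.
  set (T := fun b k => clampR (b - eta) (b + eta) (x (S k)) - clampR (b - eta) (b + eta) (x k)).
  assert (HT0 : forall b k, (k < n)%nat -> 0 <= T b k).
  { intros b k Hk. unfold T. pose proof (clampR_mono (b - eta) (b + eta) _ _ (Hmono k Hk)). lra. }
  assert (Hterm : forall k, (k < n)%nat -> Rabs (f (tg k) * (x (S k) - x k) - (G (x (S k)) - G (x k))) <= 2 * M * (T b1 k + T b2 k)).
  { intros k Hk. destruct (Htag k Hk) as [Htg [Hl Hr]]. pose proof (Hmono k Hk). unfold delta in Hl, Hr.
    destruct excluded_middle_informative as [Hb|Hb].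
    - assert (Hbound : Rabs (f (tg k) * (x (S k) - x k) - (G (x (S k)) - G (x k))) <= 2 * M * (x (S k) - x k)).
      { eapply Rle_trans. apply Rabs_triang. rewrite Rabs_Ropp, Rabs_mult, (Rabs_pos_eq (x (S k) - x k)) by lra.
        pose proof (HLip (x k) (x (S k))). rewrite (Rabs_pos_eq (x (S k) - x k)) in H0 by lra.
        assert (Rabs (f (tg k)) <= M) by (destruct Hb as [-> | ->]; auto). nra. }
      pose proof (HT0 b1 k Hk). pose proof (HT0 b2 k Hk).
      destruct Hb as [Hb|Hb].
      + assert (T b1 k = x (S k) - x k). { unfold T. rewrite !clampR_in; try lra. }
        nra.
      + assert (T b2 k = x (S k) - x k). { unfold T. rewrite !clampR_in; try lra. }
        nra.
    - destruct (Hrr (tg k) Htg) as [_ Heq]. intros Hc; apply Hb; auto. intros Hc; apply Hb; auto.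
      rewrite (Heq (x k) (x (S k))). replace (f (tg k) * (x (S k) - x k) - f (tg k) * (x (S k) - x k)) with 0 by ring.
      rewrite Rabs_R0. pose proof (HT0 b1 k Hk). pose proof (HT0 b2 k Hk). nra.
      apply Rabs_lt_iff; lra. apply Rabs_lt_iff; lra. }
  replace (G 1 - G 0) with (rsum (fun k => G (x (S k)) - G (x k)) n).
  2:{ rewrite (rsum_tele (fun k => G (x k))). rewrite Hxn, Hx0. auto. }
  rewrite <- rsum_minus. eapply Rle_lt_trans. apply rsum_abs.
  eapply Rle_lt_trans. apply rsum_le. exact Hterm.
  rewrite rsum_scal, rsum_plus. unfold T.
  rewrite (rsum_tele (fun k => clampR (b1 - eta) (b1 + eta) (x k))).
  rewrite (rsum_tele (fun k => clampR (b2 - eta) (b2 + eta) (x k))).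
  pose proof (clampR_diff (b1 - eta) (b1 + eta) (x O) (x n) ltac:(lra)).
  pose proof (clampR_diff (b2 - eta) (b2 + eta) (x O) (x n) ltac:(lra)).
  assert (2 * M * (4 * eta) < eps).
  { apply Rle_lt_trans with (8 * M * eta). lra. unfold eta.
    apply Rlt_le_trans with (8 * (M + 1) * (eps / (8 * (M + 1)))). apply Rmult_lt_compat_r. apply Rdiv_lt_0_compat; lra. lra.
    right. field. lra. }
  assert (2 * M * (clampR (b1 - eta) (b1 + eta) (x n) - clampR (b1 - eta) (b1 + eta) (x 0%nat) +
     (clampR (b2 - eta) (b2 + eta) (x n) - clampR (b2 - eta) (b2 + eta) (x 0%nat))) <= 2 * M * (4 * eta)).
  { apply Rmult_le_compat_l. lra. lra. }
  lra.
Qed.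


Lemma dpl_local F t l r : 0 < r -> (forall h, Rabs h < r -> F (t + h) = F t + l * h) -> derivable_pt_lim F t l.
Proof. intros Hr H eps Heps. exists (mkposreal r Hr). intros h Hh0 Hh. simpl in Hh. rewrite H by auto.
  replace ((F t + l * h - F t) / h - l) with 0 by (field; auto). rewrite Rabs_R0. auto. Qed.

Lemma has_deriv_local (X : R -> pt) t c0 c1 w r : 0 < r ->
  (forall s, Rabs (s - t) < r -> X s = scal (c0 + c1 * s) w) -> has_deriv X t (scal c1 w).
Proof. intros Hr H. split.
  - apply (dpl_local _ _ _ r Hr). intros h Hh. rewrite !H. unfold scal; simpl. ring.
    rewrite Rminus_diag, Rabs_R0; auto. replace (t + h - t) with h by ring. auto.
  - apply (dpl_local _ _ _ r Hr). intros h Hh. rewrite !H. unfold scal; simpl. ring.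
    rewrite Rminus_diag, Rabs_R0; auto. replace (t + h - t) with h by ring. auto.
Qed.

Lemma ae01_finite (P : R -> Prop) p1 p2 : (forall t, 0 < t < 1 -> t <> p1 -> t <> p2 -> P t) -> ae01 P.
Proof. intros H. unfold ae01.
  apply (negl_subset (fun t => ((t = 0 \/ t = 1) \/ t = p1) \/ t = p2)).
  apply negl_union. apply negl_union. apply negl_union. apply (negl_point 0). apply (negl_point 1). apply (negl_point p1). apply (negl_point p2).
  intros t [Ht Hn]. apply NNPP. intros Hc. apply Hn. apply H.
  split; apply Rnot_le_lt; intros Hle; apply Hc; [left; left; left| left; left; right]; lra.
  intros ->; apply Hc; left; right; auto. intros ->; apply Hc; right; auto. Qed.

Lemma Rmax0_lip p q : Rabs (Rmax 0 p - Rmax 0 q) <= Rabs (p - q).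
Proof. unfold Rmax. repeat destruct Rle_dec; unfold Rabs; repeat destruct Rcase_abs; lra. Qed.
Lemma Rmin_lip u v c : Rabs (Rmin v c - Rmin u c) <= Rabs (v - u).
Proof. unfold Rmin. repeat destruct Rle_dec; unfold Rabs; repeat destruct Rcase_abs; lra. Qed.
Lemma Rmax_lip u v c : Rabs (Rmax c v - Rmax c u) <= Rabs (v - u).
Proof. unfold Rmax. repeat destruct Rle_dec; unfold Rabs; repeat destruct Rcase_abs; lra. Qed.
Lemma padd_zero_l u w : padd (scal 0 u) w = w.
Proof. destruct w; unfold padd, scal; simpl; f_equal; ring. Qed.
Lemma padd_zero_r u w : padd w (scal 0 u) = w.
Proof. destruct w; unfold padd, scal; simpl; f_equal; ring. Qed.
Lemma psub_scal a b w : psub (scal a w) (scal b w) = scal (a - b) w.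
Proof. unfold psub, scal; simpl; f_equal; ring. Qed.

Section Upper.
Variable N : nat.
Variable e : nat -> pt.
Variable L : nat -> R -> R.
Hypothesis HN : (1 <= N)%nat.
Hypothesis He1 : forall i, (i < N)%nat -> pnorm (e i) = 1.
Hypothesis Hinj : forall i j, (i < N)%nat -> (j < N)%nat -> e i = e j -> i = j.
Let Hsez := scal_e_zero N e He1.
Let Hsbd := same_branch_dist N e He1.

Lemma D0_le X V y x c : admissible N e X V y x -> has_cost N e L X V c -> Rbar_le (D0 N e L y x) (Fin c).
Proof. intros Ha Hc. unfold D0.
  destruct (Einf_glb (fun z => exists X V c, admissible N e X V y x /\ has_cost N e L X V c /\ z = Fin c)) as [H _].
  apply H. exists X, V, c. auto. Qed.

Lemma upper_straight_curve i a b : (i < N)%nat -> 0 <= a -> 0 <= b -> ~ (a = 0 /\ b = 0) ->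
  Rbar_le (D0 N e L (scal a (e i)) (scal b (e i))) (Fin (L i (b - a))).
Proof.
  intros Hi Ha Hb Hab.
  set (X := fun t => scal (a + (b - a) * t) (e i)).
  apply (D0_le X (fun _ => scal (b - a) (e i))).
  - split; [|split; [|split; [|split]]].
    + intros t Ht. exists i. split; auto. exists (a + (b - a) * t). split; auto. nra.
    + intros eps Heps. exists (eps / (Rabs (b - a) + 1)). split. apply Rdiv_lt_0_compat. auto. pose proof (Rabs_pos (b-a)); lra.
      intros n a0 b0 H1 H2 H3. unfold X.
      rewrite (rsum_ext _ (fun k => Rabs (b - a) * (b0 k - a0 k))).
      2:{ intros k Hk. rewrite Hsbd by auto. replace (a + (b - a) * b0 k - (a + (b - a) * a0 k)) with ((b - a) * (b0 k - a0 k)) by ring.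
          rewrite Rabs_mult. rewrite (Rabs_pos_eq (b0 k - a0 k)); auto. destruct (H1 k Hk); lra. }
      rewrite rsum_scal. pose proof (Rabs_pos (b - a)).
      apply Rle_lt_trans with (Rabs (b - a) * (eps / (Rabs (b - a) + 1))). apply Rmult_le_compat_l; lra.
      apply Rlt_le_trans with ((Rabs (b - a) + 1) * (eps / (Rabs (b - a) + 1))).
      apply Rmult_lt_compat_r. apply Rdiv_lt_0_compat; lra. lra. right. field. lra.
    + unfold X. f_equal. ring.
    + unfold X. f_equal. ring.
    + apply (ae01_finite _ 0 0). intros t Ht _ _. split.
      * apply (has_deriv_local X t a (b - a) (e i) 1). lra. intros; auto.
      * left. exists i. split; auto. split. exists (a + (b - a) * t). split; auto.
        destruct (Req_dec a 0); destruct (Req_dec b 0); try tauto; nra. eauto.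
  - exists (fun _ => L i (b - a)). split.
    + apply (ae01_finite _ 0 0). intros t Ht _ _. left. exists i. split; auto. split.
      exists (a + (b - a) * t). split; auto. destruct (Req_dec a 0); destruct (Req_dec b 0); try tauto; nra.
      exists (b - a). split; auto.
    + assert (Hm : mcshane01 (fun _ => L i (b - a)) ((fun t => L i (b - a) * t) 1 - (fun t => L i (b - a) * t) 0)).
      2:{ simpl in Hm. replace (L i (b - a) * 1 - L i (b - a) * 0) with (L i (b - a)) in Hm by ring. exact Hm. }
      apply (mcshane_pl _ _ 0 0 (Rabs (L i (b - a)))). apply Rabs_pos.
      * intros u v. replace (L i (b - a) * v - L i (b - a) * u) with (L i (b - a) * (v - u)) by ring. rewrite Rabs_mult. lra.
      * intros t _ _ _. exists 1. split. lra. intros; ring.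
      * lra.
      * lra.
Qed.

Lemma upper_junction_curve j a i b t1 t2 : (j < N)%nat -> (i < N)%nat -> 0 <= a -> 0 <= b ->
  0 <= t1 -> t1 <= t2 -> t2 <= 1 -> (0 < a -> 0 < t1) -> (0 < b -> t2 < 1) ->
  Rbar_le (D0 N e L (scal a (e j)) (scal b (e i)))
    (Fin (t1 * (if Req_EM_T a 0 then L0 N L 0 else L j (- a / t1)) + (t2 - t1) * L0 N L 0 +
          (1 - t2) * (if Req_EM_T b 0 then L0 N L 0 else L i (b / (1 - t2))))).
Proof.
  intros Hj Hi Ha Hb Ht1 Ht12 Ht2 Hat Hbt.
  set (l0 := L0 N L 0).
  set (F1 := if Req_EM_T a 0 then l0 else L j (- a / t1)).
  set (F3 := if Req_EM_T b 0 then l0 else L i (b / (1 - t2))).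
  set (al := fun t => a * Rmax 0 (1 - t / t1)).
  set (be := fun t => b * Rmax 0 ((t - t2) / (1 - t2))).
  set (X := fun t => padd (scal (al t) (e j)) (scal (be t) (e i))).
  assert (Hal0 : forall t, t1 <= t -> al t = 0).
  { intros t Ht. unfold al. destruct (Req_dec a 0) as [H0|H0]. rewrite H0; ring.
    assert (0 < t1) by (apply Hat; lra). rewrite Rmax_left. ring.
    assert (1 <= t / t1). { apply (Rmult_le_reg_r t1); auto. unfold Rdiv. rewrite Rmult_assoc, Rinv_l by lra. lra. } lra. }
  assert (Hbe0 : forall t, t <= t2 -> be t = 0).
  { intros t Ht. unfold be. destruct (Req_dec b 0) as [H0|H0]. rewrite H0; ring.
    assert (t2 < 1) by (apply Hbt; lra). rewrite Rmax_left. ring.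
    assert ((t - t2) / (1 - t2) <= 0). { unfold Rdiv. assert (0 < / (1 - t2)) by (apply Rinv_0_lt_compat; lra). nra. } lra. }
  assert (Hal1 : forall t, t <= t1 -> al t = a + (- a / t1) * t).
  { intros t Ht. unfold al. destruct (Req_dec a 0) as [H0|H0]. rewrite H0. unfold Rdiv; ring.
    assert (0 < t1) by (apply Hat; lra). rewrite Rmax_right. field. lra.
    assert (t / t1 <= 1). { apply (Rmult_le_reg_r t1); auto. unfold Rdiv. rewrite Rmult_assoc, Rinv_l by lra. lra. } lra. }
  assert (Hbe1 : forall t, t2 <= t -> be t = (- b * t2 / (1 - t2)) + (b / (1 - t2)) * t).
  { intros t Ht. unfold be. destruct (Req_dec b 0) as [H0|H0]. rewrite H0. unfold Rdiv; ring.
    assert (t2 < 1) by (apply Hbt; lra). rewrite Rmax_right. field. lra.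
    unfold Rdiv. apply Rmult_le_pos. lra. left. apply Rinv_0_lt_compat. lra. }
  assert (HXa : forall t, t <= t2 -> X t = scal (al t) (e j)).
  { intros t Ht. unfold X. rewrite Hbe0 by auto. apply padd_zero_r. }
  assert (HXb : forall t, t1 <= t -> X t = scal (be t) (e i)).
  { intros t Ht. unfold X. rewrite Hal0 by auto. apply padd_zero_l. }
  assert (Hal_nn : forall t, t <= 1 -> 0 <= al t) by (intros; unfold al; apply Rmult_le_pos; auto; apply Rmax_l).
  assert (Hbe_nn : forall t, 0 <= be t) by (intros; unfold be; apply Rmult_le_pos; auto; apply Rmax_l).
  set (V := fun t => if Rlt_dec t t1 then scal (- a / t1) (e j) else if Rle_dec t t2 then pzero else scal (b / (1 - t2)) (e i)).
  set (f := fun t => if Rlt_dec t t1 then F1 else if Rle_dec t t2 then l0 else F3).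
  assert (Hgood : forall t, 0 < t < 1 -> t <> t1 -> t <> t2 ->
     (has_deriv X t (V t) /\ Aset N e (X t) (V t)) /\ Lrel N e L (X t) (V t) (f t)).
  { intros t Ht Htt1 Htt2. unfold V, f. destruct (Rlt_dec t t1) as [Hlt|Hge].
    - assert (Hd : has_deriv X t (scal (- a / t1) (e j))).
      { apply (has_deriv_local X t a (- a / t1) (e j) (t1 - t)). lra.
        intros s Hs. apply Rabs_lt_iff in Hs. rewrite HXa by lra. rewrite Hal1 by lra. auto. }
      rewrite HXa by lra. unfold F1. destruct (Req_EM_T a 0) as [H0|H0].
      + assert (Hz : al t = 0) by (rewrite Hal1 by lra; rewrite H0; unfold Rdiv; ring).
        assert (HV0 : scal (- a / t1) (e j) = scal 0 (e j)) by (rewrite H0; f_equal; unfold Rdiv; ring).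
        split. split. auto.
        right. rewrite Hz, scal_zero. split; auto. exists j. split; auto. exists 0. split. lra. auto.
        right. rewrite Hz, scal_zero. split; auto. exists j. split; auto. exists 0. split. lra. auto.
      + assert (0 < t1) by (apply Hat; lra).
        assert (Hpos : 0 < al t). { rewrite Hal1 by lra. replace (a + - a / t1 * t) with (a * (1 - t / t1)) by (field; lra).
          apply Rmult_lt_0_compat. lra. assert (t / t1 < 1). { apply (Rmult_lt_reg_r t1); auto. unfold Rdiv. rewrite Rmult_assoc, Rinv_l by lra. lra. } lra. }
        split. split. auto.
        left. exists j. split; auto. split. exists (al t). split; auto. eauto.
        left. exists j. split; auto. split. exists (al t). split; auto. exists (- a / t1). split; auto.
    - destruct (Rle_dec t t2) as [Hle|Hgt].
      + assert (Hmid : t1 < t < t2) by lra.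
        assert (HX0 : X t = pzero) by (rewrite HXa, Hal0 by lra; apply scal_zero).
        assert (Hd : has_deriv X t (scal 0 (e j))).
        { apply (has_deriv_local X t 0 0 (e j) (Rmin (t - t1) (t2 - t))). apply Rmin_case; lra.
          intros s Hs. pose proof (Rmin_l (t - t1) (t2 - t)). pose proof (Rmin_r (t - t1) (t2 - t)).
          apply Rabs_lt_iff in Hs. rewrite HXa, Hal0 by lra. f_equal. ring. }
        rewrite scal_zero in Hd. rewrite HX0. split. split. exact Hd.
        right. split; auto. exists j. split; auto. exists 0. split. lra. rewrite scal_zero; auto.
        right. split; auto. exists j. split; auto. exists 0. split. lra. rewrite scal_zero; auto.
      + assert (Hgt2 : t2 < t) by lra.
        assert (Hd : has_deriv X t (scal (b / (1 - t2)) (e i))).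
        { apply (has_deriv_local X t (- b * t2 / (1 - t2)) (b / (1 - t2)) (e i) (t - t2)). lra.
          intros s Hs. apply Rabs_lt_iff in Hs. rewrite HXb by lra. rewrite Hbe1 by lra. auto. }
        rewrite HXb by lra. unfold F3. destruct (Req_EM_T b 0) as [H0|H0].
        * assert (Hz : be t = 0) by (rewrite Hbe1 by lra; rewrite H0; unfold Rdiv; ring).
          assert (HV0 : scal (b / (1 - t2)) (e i) = scal 0 (e i)) by (rewrite H0; f_equal; unfold Rdiv; ring).
          split. split. auto.
          right. rewrite Hz, scal_zero. split; auto. exists i. split; auto. exists 0. split. lra. auto.
          right. rewrite Hz, scal_zero. split; auto. exists i. split; auto. exists 0. split. lra. auto.
        * assert (t2 < 1) by (apply Hbt; lra).
          assert (Hpos : 0 < be t). { rewrite Hbe1 by lra. replace (- b * t2 / (1 - t2) + b / (1 - t2) * t) with (b * ((t - t2) / (1 - t2))) by (field; lra).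
            apply Rmult_lt_0_compat. lra. apply Rdiv_lt_0_compat; lra. }
          split. split. auto.
          left. exists i. split; auto. split. exists (be t). split; auto. eauto.
          left. exists i. split; auto. split. exists (be t). split; auto. exists (b / (1 - t2)). split; auto. }
  apply (D0_le X V).
  - split; [|split; [|split; [|split]]].
    + intros t Ht. destruct (Rle_dec t t2).
      * rewrite HXa by auto. exists j. split; auto. exists (al t). split; auto. apply Hal_nn. lra.
      * rewrite HXb by lra. exists i. split; auto. exists (be t). split; auto.
    +
      set (K := a * Rabs (/ t1) + b * Rabs (/ (1 - t2))).
      assert (HK : 0 <= K) by (unfold K; pose proof (Rabs_pos (/ t1)); pose proof (Rabs_pos (/ (1 - t2))); nra).
      assert (HLip : forall u v, u <= v -> pnorm (psub (X v) (X u)) <= K * (v - u)).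
      { intros u v Huv. unfold X.
        replace (psub (padd (scal (al v) (e j)) (scal (be v) (e i))) (padd (scal (al u) (e j)) (scal (be u) (e i))))
          with (padd (scal (al v - al u) (e j)) (scal (be v - be u) (e i))) by (unfold psub, padd, scal; simpl; f_equal; ring).
        eapply Rle_trans. apply pnorm_triangle. rewrite !pnorm_scal, !He1 by auto. rewrite !Rmult_1_r.
        assert (Rabs (al v - al u) <= a * Rabs (/ t1) * (v - u)).
        { unfold al. replace (a * Rmax 0 (1 - v / t1) - a * Rmax 0 (1 - u / t1)) with (a * (Rmax 0 (1 - v / t1) - Rmax 0 (1 - u / t1))) by ring.
          rewrite Rabs_mult, (Rabs_pos_eq a) by auto. rewrite Rmult_assoc. apply Rmult_le_compat_l; auto.
          eapply Rle_trans. apply Rmax0_lip. replace (1 - v / t1 - (1 - u / t1)) with ((u - v) * / t1) by (unfold Rdiv; ring).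
          rewrite Rabs_mult, Rabs_minus_sym, (Rabs_pos_eq (v - u)) by lra. lra. }
        assert (Rabs (be v - be u) <= b * Rabs (/ (1 - t2)) * (v - u)).
        { unfold be. replace (b * Rmax 0 ((v - t2) / (1 - t2)) - b * Rmax 0 ((u - t2) / (1 - t2))) with (b * (Rmax 0 ((v - t2) / (1 - t2)) - Rmax 0 ((u - t2) / (1 - t2)))) by ring.
          rewrite Rabs_mult, (Rabs_pos_eq b) by auto. rewrite Rmult_assoc. apply Rmult_le_compat_l; auto.
          eapply Rle_trans. apply Rmax0_lip. replace ((v - t2) / (1 - t2) - (u - t2) / (1 - t2)) with ((v - u) * / (1 - t2)) by (unfold Rdiv; ring).
          rewrite Rabs_mult, (Rabs_pos_eq (v - u)) by lra. lra. }
        unfold K. lra. }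
      intros eps Heps. exists (eps / (K + 1)). split. apply Rdiv_lt_0_compat; lra.
      intros n a0 b0 H1 H2 H3. apply Rle_lt_trans with (rsum (fun k => K * (b0 k - a0 k)) n).
      apply rsum_le. intros k Hk. apply HLip. destruct (H1 k Hk); lra.
      rewrite rsum_scal. apply Rle_lt_trans with (K * (eps / (K + 1))). apply Rmult_le_compat_l; lra.
      apply Rlt_le_trans with ((K + 1) * (eps / (K + 1))). apply Rmult_lt_compat_r. apply Rdiv_lt_0_compat; lra. lra.
      right. field. lra.
    + rewrite HXa by lra. rewrite Hal1 by lra. f_equal. unfold Rdiv; ring.
    + rewrite HXb by lra. rewrite Hbe1 by lra. f_equal. destruct (Req_dec b 0) as [H0|H0]. rewrite H0; unfold Rdiv; ring.
      assert (t2 < 1) by (apply Hbt; lra). field. lra.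
    + apply (ae01_finite _ t1 t2). intros t Ht H1 H2. apply Hgood; auto.
  - exists f. split.
    + apply (ae01_finite _ t1 t2). intros t Ht H1 H2. apply Hgood; auto.
    + set (G := fun t => F1 * Rmin t t1 + l0 * (Rmax t1 (Rmin t t2) - t1) + F3 * Rmax 0 (t - t2)).
      assert (HG : G 1 - G 0 = t1 * F1 + (t2 - t1) * l0 + (1 - t2) * F3).
      { unfold G. rewrite (Rmin_right 1 t1), (Rmin_right 1 t2), (Rmax_right t1 t2), (Rmax_right 0 (1 - t2)) by lra.
        rewrite (Rmin_left 0 t1), (Rmin_left 0 t2), (Rmax_left t1 0), (Rmax_left 0 (0 - t2)) by lra. ring. }
      fold l0 F1 F3. rewrite <- HG.
      apply (mcshane_pl f G t1 t2 (Rabs F1 + Rabs l0 + Rabs F3)).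
      * pose proof (Rabs_pos F1); pose proof (Rabs_pos l0); pose proof (Rabs_pos F3); lra.
      * intros u v. unfold G.
        replace (F1 * Rmin v t1 + l0 * (Rmax t1 (Rmin v t2) - t1) + F3 * Rmax 0 (v - t2) - (F1 * Rmin u t1 + l0 * (Rmax t1 (Rmin u t2) - t1) + F3 * Rmax 0 (u - t2)))
          with (F1 * (Rmin v t1 - Rmin u t1) + l0 * (Rmax t1 (Rmin v t2) - Rmax t1 (Rmin u t2)) + F3 * (Rmax 0 (v - t2) - Rmax 0 (u - t2))) by ring.
        pose proof (Rmin_lip u v t1). pose proof (Rmin_lip u v t2).
        pose proof (Rmax_lip (Rmin u t2) (Rmin v t2) t1). pose proof (Rmax0_lip (v - t2) (u - t2)).
        replace (v - t2 - (u - t2)) with (v - u) in H2 by ring.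
        eapply Rle_trans. apply Rabs_triang. eapply Rle_trans. apply Rplus_le_compat_r. apply Rabs_triang.
        rewrite !Rabs_mult.
        pose proof (Rabs_pos F1); pose proof (Rabs_pos l0); pose proof (Rabs_pos F3).
        assert (Rabs F1 * Rabs (Rmin v t1 - Rmin u t1) <= Rabs F1 * Rabs (v - u)) by (apply Rmult_le_compat_l; auto).
        assert (Rabs l0 * Rabs (Rmax t1 (Rmin v t2) - Rmax t1 (Rmin u t2)) <= Rabs l0 * Rabs (v - u)) by (apply Rmult_le_compat_l; lra).
        assert (Rabs F3 * Rabs (Rmax 0 (v - t2) - Rmax 0 (u - t2)) <= Rabs F3 * Rabs (v - u)) by (apply Rmult_le_compat_l; auto).
        lra.
      * intros t Ht H1 H2. unfold f. destruct (Rlt_dec t t1) as [Hlt|Hge].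
        -- exists (t1 - t). split. lra. intros u v Hu Hv. apply Rabs_lt_iff in Hu. apply Rabs_lt_iff in Hv. unfold G.
           rewrite (Rmin_left u t1), (Rmin_left v t1), (Rmin_left u t2), (Rmin_left v t2), (Rmax_left t1 u), (Rmax_left t1 v),
             (Rmax_left 0 (u - t2)), (Rmax_left 0 (v - t2)) by lra. ring.
        -- destruct (Rle_dec t t2) as [Hle|Hgt].
           ++ exists (Rmin (t - t1) (t2 - t)). split. apply Rmin_case; lra.
              intros u v Hu Hv. pose proof (Rmin_l (t - t1) (t2 - t)). pose proof (Rmin_r (t - t1) (t2 - t)).
              apply Rabs_lt_iff in Hu. apply Rabs_lt_iff in Hv. unfold G.
              rewrite (Rmin_right u t1), (Rmin_right v t1), (Rmin_left u t2), (Rmin_left v t2), (Rmax_right t1 u), (Rmax_right t1 v),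
                (Rmax_left 0 (u - t2)), (Rmax_left 0 (v - t2)) by lra. ring.
           ++ exists (t - t2). split. lra. intros u v Hu Hv. apply Rabs_lt_iff in Hu. apply Rabs_lt_iff in Hv. unfold G.
              rewrite (Rmin_right u t1), (Rmin_right v t1), (Rmin_right u t2), (Rmin_right v t2), (Rmax_right t1 t2),
                (Rmax_right 0 (u - t2)), (Rmax_right 0 (v - t2)) by lra. ring.
      * unfold f. destruct Rlt_dec; [|destruct Rle_dec]; pose proof (Rabs_pos F1); pose proof (Rabs_pos l0); pose proof (Rabs_pos F3); lra.
      * unfold f. destruct Rlt_dec; [|destruct Rle_dec]; pose proof (Rabs_pos F1); pose proof (Rabs_pos l0); pose proof (Rabs_pos F3); lra.
Qed.

End Upper.


Lemma Rbar_le_PInf a : Rbar_le a PInf.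
Proof. destruct a; simpl; auto. Qed.
Lemma Rbar_plus_PInf_r a : Rbar_plus a PInf = PInf.
Proof. destruct a; simpl; auto. Qed.

Section Final.
Variable N : nat.
Variable e : nat -> pt.
Variable L : nat -> R -> R.
Hypothesis HN : (1 <= N)%nat.
Hypothesis He1 : forall i, (i < N)%nat -> pnorm (e i) = 1.
Hypothesis Hinj : forall i j, (i < N)%nat -> (j < N)%nat -> e i = e j -> i = j.

Lemma upper_straight x y : inJ N e x -> inJ N e y -> Rbar_le (D0 N e L y x) (Dstraight N e L y x).
Proof.
  intros [i [Hi [b [Hb ->]]]] [j [Hj [a [Ha ->]]]].
  assert (Hsame : forall k a b, (k < N)%nat -> 0 <= a -> 0 <= b ->
     Rbar_le (D0 N e L (scal a (e k)) (scal b (e k))) (Dstraight N e L (scal a (e k)) (scal b (e k)))).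
  { intros k a' b' Hk Ha' Hb'. destruct (classic (a' = 0 /\ b' = 0)) as [[Ha0 Hb0]|Hn].
    - subst. rewrite scal_zero. rewrite Dstraight_zero by auto.
      pose proof (upper_junction_curve N e L He1 k 0 k 0 0 0 Hk Hk ltac:(lra) ltac:(lra) ltac:(lra) ltac:(lra) ltac:(lra)
        ltac:(lra) ltac:(lra)) as H. rewrite scal_zero in H.
      destruct (Req_EM_T 0 0); [|lra]. replace (0 * L0 N L 0 + (0 - 0) * L0 N L 0 + (1 - 0) * L0 N L 0) with (L0 N L 0) in H by ring. auto.
    - rewrite Dstraight_same by auto. apply upper_straight_curve; auto. }
  destruct (Nat.eq_dec i j) as [->|Hij]. apply Hsame; auto.
  destruct (Req_dec a 0) as [Ha0|Ha0].
  { subst a. replace (scal 0 (e j)) with (scal 0 (e i)) by (rewrite !scal_zero; auto). apply Hsame; auto; lra. }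
  destruct (Req_dec b 0) as [Hb0|Hb0].
  { subst b. replace (scal 0 (e i)) with (scal 0 (e j)) by (rewrite !scal_zero; auto). apply Hsame; auto; lra. }
  rewrite Dstraight_diff; auto; try lra. apply Rbar_le_PInf.
Qed.

Lemma upper_junction x y : inJ N e x -> inJ N e y -> Rbar_le (D0 N e L y x) (Djunction N e L y x).
Proof.
  intros [i [Hi [b [Hb ->]]]] [j [Hj [a [Ha ->]]]]. unfold Djunction.
  destruct (Einf_glb (fun z => exists t1 t2, 0 <= t1 /\ t1 <= t2 /\ t2 <= 1 /\
                  z = Rbar_plus (Defs.E1 N e L t1 (scal a (e j))) (Defs.E2 N e L t2 (scal b (e i))))) as [_ Hg].
  apply Hg. intros z [t1 [t2 [Ht1 [Ht12 [Ht2 ->]]]]].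
  destruct (classic (0 < a /\ t1 = 0)) as [[Hap Ht0]|Hn1].
  { rewrite Ht0, E1_inf. simpl. apply Rbar_le_PInf. intros Hz. apply (scal_e_zero N e He1) in Hz; auto. lra. }
  destruct (classic (0 < b /\ t2 = 1)) as [[Hbp Ht0]|Hn2].
  { rewrite Ht0, E2_inf. rewrite Rbar_plus_PInf_r. apply Rbar_le_PInf. auto. intros Hz. apply (scal_e_zero N e He1) in Hz; auto. lra. }
  assert (Hat : 0 < a -> 0 < t1). { intros. destruct (Req_dec t1 0). exfalso; apply Hn1; auto. lra. }
  assert (Hbt : 0 < b -> t2 < 1). { intros. destruct (Req_dec t2 1). exfalso; apply Hn2; auto. lra. }
  pose proof (upper_junction_curve N e L He1 j a i b t1 t2 Hj Hi Ha Hb Ht1 Ht12 Ht2 Hat Hbt) as H.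
  eapply Rbar_le_trans. exact H. 
  destruct (Req_EM_T a 0) as [Ha0|Ha0]; destruct (Req_EM_T b 0) as [Hb0|Hb0].
  - rewrite Ha0, Hb0, !scal_zero, E1_zero, E2_zero by auto. simpl. right. ring.
  - rewrite Ha0, scal_zero, E1_zero, E2_star by (auto; lra). simpl. right. ring.
  - rewrite Hb0, scal_zero, E1_star, E2_zero by (auto; lra). simpl. right. ring.
  - rewrite E1_star, E2_star by (auto; lra). simpl. right. ring.
Qed.
End Final.

Theorem mainTheorem15 (N : nat) (e : nat -> pt) (L : nat -> R -> R) (gamma : R) :
  (1 <= N)%nat ->
  (forall i, (i < N)%nat -> pnorm (e i) = 1) ->
  (forall i j, (i < N)%nat -> (j < N)%nat -> e i = e j -> i = j) ->
  0 < gamma ->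
  (forall i, (i < N)%nat -> C2_convex gamma (L i)) ->
  forall x y : pt, inJ N e x -> inJ N e y ->
    D0 N e L y x = Rbar_min (Dstraight N e L y x) (Djunction N e L y x).
Proof.
  intros HN He1 Hinj Hg HL x y Hx Hy.
  apply Rbar_le_antisym.
  - apply Rbar_min_glb. apply upper_straight; auto. apply upper_junction; auto.
  - unfold D0.
    destruct (Einf_glb (fun z => exists X V c, admissible N e X V y x /\ has_cost N e L X V c /\ z = Fin c)) as [_ H].
    apply H. intros z [X [V [c [Ha [Hc ->]]]]]. apply (lower N e L gamma HN He1 Hinj Hg HL X V y x c); auto.
Qed.
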